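(* Let $\widetilde{E(2)}$ be as described in the context, let $K$ be a real number with $K\neq 0$ and $|K|<1$, let $b:\mathbb{R}\to\mathbb{R}$ be the solution of $$b'(v)=\sqrt{\lambda_1^2-K\left(\lambda_1^2\cos^2 b(v)+\lambda_2^2\sin^2 b(v)\right)},\qquad b(0)=0,$$ and let $x_3:\mathbb{R}\to\mathbb{R}$ be the solution of $x_3'(v)=\dfrac{\lambda_1\lambda_2K}{\lambda_1+b'(v)}$, $x_3(0)=0$. Then the mapping $X:\mathbb{C}\to\widetilde{E(2)}$, $X(u+iv)=(x_1,x_2,x_3)$ with $$x_1(u+iv)=\frac{1}{\lambda_1^2\lambda_2}\left(\frac{1}{\lambda_1}\cos x_3(v)\sin b(v)+\frac{1}{\lambda_2}\sin x_3(v)\cos b(v)\right)x_3'(v)\sinh(-\lambda_1u),$$ $$x_2(u+iv)=\frac{1}{\lambda_1^2\lambda_2}\left(\frac{1}{\lambda_1}\sin x_3(v)\sin b(v)-\frac{1}{\lambda_2}\cos x_3(v)\cos b(v)\right)x_3'(v)\sinh(-\lambda_1u),$$ $$x_3(u+iv)=x_3(v),$$ is a conformal minimal immersion from $\mathbb{C}$ into $\widetilde{E(2)}$ whose Gauss map (for a suitable choice of unit normal) is $g(u+iv)=e^{-\lambda_1u}e^{ib(v)}$.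
   Context: $\widetilde{E(2)}$ is $\mathbb{R}^3$ with coordinates $(x_1,x_2,x_3)$ and group law $(a_1,b_1,c_1)*(a_2,b_2,c_2)=(a_1+a_2\cos c_1-b_2\sin c_1,\ b_1+a_2\sin c_1+b_2\cos c_1,\ c_1+c_2)$, endowed with the left-invariant Riemannian metric $\lambda_1^2(\cos x_3\,dx_1+\sin x_3\,dx_2)^2+\lambda_2^2(-\sin x_3\,dx_1+\cos x_3\,dx_2)^2+\frac{1}{\lambda_1^2\lambda_2^2}dx_3^2$, where either $\lambda_1>\lambda_2>0$ or $\lambda_1=\lambda_2=1$. The left-invariant orthonormal frame is $E_1=\frac{1}{\lambda_1}(\cos x_3\,\partial_{x_1}+\sin x_3\,\partial_{x_2})$, $E_2=\frac{1}{\lambda_2}(-\sin x_3\,\partial_{x_1}+\cos x_3\,\partial_{x_2})$, $E_3=\lambda_1\lambda_2\,\partial_{x_3}$. For an immersed surface with unit normal $N=N_1E_1+N_2E_2+N_3E_3$, its Gauss map is $g=\frac{N_1+iN_2}{1+N_3}\in\mathbb{C}\cup\{\infty\}$ (stereographic projection from the south pole of the left-invariant Gauss map). Points of $\mathbb{C}$ are written $z=u+iv$. *)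

(* Defs.v *)
From Stdlib Require Import Reals.
From Coquelicot Require Import Coquelicot.
Open Scope R_scope.

(* Points of the Lie group E(2)~ = R^3, coordinates (x1,x2,x3) indexed 0,1,2. *)
Definition pt := (R * R * R)%type.

Definition coord (p : pt) (i : nat) : R :=
  match i with 0%nat => fst (fst p) | 1%nat => snd (fst p) | _ => snd p end.

Definition upd (p : pt) (i : nat) (t : R) : pt :=
  match i with
  | 0%nat => (t, snd (fst p), snd p)
  | 1%nat => (fst (fst p), t, snd p)
  | _ => (fst (fst p), snd (fst p), t)
  end.

Definition pderiv (f : pt -> R) (i : nat) (p : pt) : R :=
  Derive (fun t => f (upd p i t)) (coord p i).

Definition sum3 (f : nat -> R) : R := f 0%nat + f 1%nat + f 2%nat.

(* Left-invariant coframe theta^a (a = 0,1,2), component i: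
   theta^1 = l1 (cos x3 dx1 + sin x3 dx2), theta^2 = l2(-sin x3 dx1 + cos x3 dx2),
   theta^3 = 1/(l1 l2) dx3, so that the metric is sum_a theta^a (x) theta^a. *)
Definition coframe (l1 l2 : R) (a i : nat) (p : pt) : R :=
  let x3 := coord p 2 in
  match a, i with
  | 0%nat, 0%nat => l1 * cos x3
  | 0%nat, 1%nat => l1 * sin x3
  | 1%nat, 0%nat => - l2 * sin x3
  | 1%nat, 1%nat => l2 * cos x3
  | 2%nat, 2%nat => 1 / (l1 * l2)
  | _, _ => 0
  end.

(* Left-invariant orthonormal frame E_a (a = 0,1,2 for E_1,E_2,E_3), component i
   in the coordinate basis d/dx_i. *)
Definition frame (l1 l2 : R) (a i : nat) (p : pt) : R :=
  let x3 := coord p 2 in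
  match a, i with
  | 0%nat, 0%nat => (1 / l1) * cos x3
  | 0%nat, 1%nat => (1 / l1) * sin x3
  | 1%nat, 0%nat => (1 / l2) * (- sin x3)
  | 1%nat, 1%nat => (1 / l2) * cos x3
  | 2%nat, 2%nat => l1 * l2
  | _, _ => 0
  end.

(* The Riemannian metric in coordinates:
   l1^2 (cos x3 dx1 + sin x3 dx2)^2 + l2^2 (-sin x3 dx1 + cos x3 dx2)^2 + dx3^2/(l1^2 l2^2). *)
Definition metric (l1 l2 : R) (i j : nat) (p : pt) : R :=
  sum3 (fun a => coframe l1 l2 a i p * coframe l1 l2 a j p).

(* Inverse metric g^{ij} = sum_a E_a^i E_a^j (E is g-orthonormal). *)
Definition metric_inv (l1 l2 : R) (i j : nat) (p : pt) : R :=
  sum3 (fun a => frame l1 l2 a i p * frame l1 l2 a j p).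

Definition christoffel (l1 l2 : R) (k i j : nat) (p : pt) : R :=
  / 2 * sum3 (fun l => metric_inv l1 l2 k l p *
     (pderiv (metric l1 l2 j l) i p + pderiv (metric l1 l2 i l) j p
      - pderiv (metric l1 l2 i j) l p)).

Definition inner (l1 l2 : R) (p : pt) (x y : nat -> R) : R :=
  sum3 (fun i => sum3 (fun j => metric l1 l2 i j p * x i * y j)).

Definition pu (f : R -> R -> R) (u v : R) : R := Derive (fun s => f s v) u.
Definition pv (f : R -> R -> R) (u v : R) : R := Derive (fun t => f u t) v.

Fixpoint Ck (n : nat) (f : R -> R -> R) : Prop :=
  (forall u v, continuous (fun q : R * R => f (fst q) (snd q)) (u, v)) /\
  match n with
  | 0%nat => True
  | S m => (forall u v, ex_derive (fun s => f s v) u) /\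
           (forall u v, ex_derive (fun t => f u t) v) /\
           Ck m (pu f) /\ Ck m (pv f)
  end.

Definition Xc (X : R -> R -> pt) (k : nat) (u v : R) : R := coord (X u v) k.

Definition smooth_map (X : R -> R -> pt) : Prop :=
  forall n k, Ck n (Xc X k).

Definition Xu (X : R -> R -> pt) (u v : R) : nat -> R := fun k => pu (Xc X k) u v.
Definition Xv (X : R -> R -> pt) (u v : R) : nat -> R := fun k => pv (Xc X k) u v.

Definition immersion (X : R -> R -> pt) : Prop :=
  forall u v al be : R,
    (forall k, (k < 3)%nat -> al * Xu X u v k + be * Xv X u v k = 0) ->
    al = 0 /\ be = 0.

Definition fE l1 l2 X u v := inner l1 l2 (X u v) (Xu X u v) (Xu X u v).
Definition fF l1 l2 X u v := inner l1 l2 (X u v) (Xu X u v) (Xv X u v).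
Definition fG l1 l2 X u v := inner l1 l2 (X u v) (Xv X u v) (Xv X u v).

Definition conformal (l1 l2 : R) (X : R -> R -> pt) : Prop :=
  forall u v, fE l1 l2 X u v = fG l1 l2 X u v /\ fF l1 l2 X u v = 0.

Definition unit_normal (l1 l2 : R) (X : R -> R -> pt) (u v : R) (N : nat -> R) : Prop :=
  inner l1 l2 (X u v) N N = 1 /\
  inner l1 l2 (X u v) N (Xu X u v) = 0 /\
  inner l1 l2 (X u v) N (Xv X u v) = 0.

Definition cov_uu l1 l2 X u v : nat -> R := fun k =>
  pu (pu (Xc X k)) u v + sum3 (fun i => sum3 (fun j =>
     christoffel l1 l2 k i j (X u v) * Xu X u v i * Xu X u v j)).
Definition cov_uv l1 l2 X u v : nat -> R := fun k =>
  pv (pu (Xc X k)) u v + sum3 (fun i => sum3 (fun j =>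
     christoffel l1 l2 k i j (X u v) * Xu X u v i * Xv X u v j)).
Definition cov_vv l1 l2 X u v : nat -> R := fun k =>
  pv (pv (Xc X k)) u v + sum3 (fun i => sum3 (fun j =>
     christoffel l1 l2 k i j (X u v) * Xv X u v i * Xv X u v j)).

Definition mean_curvature l1 l2 X u v (N : nat -> R) : R :=
  let p := X u v in
  let l := inner l1 l2 p (cov_uu l1 l2 X u v) N in
  let m := inner l1 l2 p (cov_uv l1 l2 X u v) N in
  let n := inner l1 l2 p (cov_vv l1 l2 X u v) N in
  let E := fE l1 l2 X u v in
  let F := fF l1 l2 X u v in
  let G := fG l1 l2 X u v in
  (E * n - 2 * F * m + G * l) / (2 * (E * G - F ^ 2)).

Definition minimal (l1 l2 : R) (X : R -> R -> pt) : Prop :=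
  forall u v N, unit_normal l1 l2 X u v N -> mean_curvature l1 l2 X u v N = 0.

Definition frame_comp (l1 l2 : R) (p : pt) (N : nat -> R) (a : nat) : R :=
  inner l1 l2 p N (fun i => frame l1 l2 a i p).

(* Gauss map value (N1 + i N2)/(1 + N3) (meaningful when N3 <> -1). *)
Definition gauss_map (l1 l2 : R) (p : pt) (N : nat -> R) : C :=
  ((RtoC (frame_comp l1 l2 p N 0) + Ci * RtoC (frame_comp l1 l2 p N 1))
  / RtoC (1 + frame_comp l1 l2 p N 2))%C.

Definition bprime (l1 l2 K y : R) : R :=
  sqrt (l1 ^ 2 - K * (l1 ^ 2 * (cos y) ^ 2 + l2 ^ 2 * (sin y) ^ 2)).

Definition x3prime (l1 l2 K : R) (b : R -> R) (v : R) : R :=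
  l1 * l2 * K / (l1 + bprime l1 l2 K (b v)).

Definition Xmap (l1 l2 K : R) (b x3 : R -> R) (u v : R) : pt :=
  ( 1 / (l1 ^ 2 * l2) *
      ((1 / l1) * cos (x3 v) * sin (b v) + (1 / l2) * sin (x3 v) * cos (b v))
      * x3prime l1 l2 K b v * sinh (- l1 * u),
    1 / (l1 ^ 2 * l2) *
      ((1 / l1) * sin (x3 v) * sin (b v) - (1 / l2) * cos (x3 v) * cos (b v))
      * x3prime l1 l2 K b v * sinh (- l1 * u),
    x3 v ).

(* Main.v *)
Require Import Defs.
From Stdlib Require Import Reals.
From Coquelicot Require Import Coquelicot.
From Stdlib Require Import Lra Lia FunctionalExtensionality.
Open Scope R_scope.

Definition cofq (l1 l2 : R) (a i : nat) (c s : R) : R :=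
  match a, i with
  | 0%nat, 0%nat => l1 * c
  | 0%nat, 1%nat => l1 * s
  | 1%nat, 0%nat => - l2 * s
  | 1%nat, 1%nat => l2 * c
  | 2%nat, 2%nat => 1 / (l1 * l2)
  | _, _ => 0
  end.
Definition cofdq (l1 l2 : R) (a i : nat) (c s : R) : R :=
  match a, i with
  | 0%nat, 0%nat => - (l1 * s)
  | 0%nat, 1%nat => l1 * c
  | 1%nat, 0%nat => - l2 * c
  | 1%nat, 1%nat => - (l2 * s)
  | _, _ => 0
  end.
Definition frq (l1 l2 : R) (a i : nat) (c s : R) : R :=
  match a, i with
  | 0%nat, 0%nat => (1 / l1) * c
  | 0%nat, 1%nat => (1 / l1) * s
  | 1%nat, 0%nat => (1 / l2) * (- s)
  | 1%nat, 1%nat => (1 / l2) * c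
  | 2%nat, 2%nat => l1 * l2
  | _, _ => 0
  end.
Definition mfq l1 l2 i j c s := sum3 (fun a => cofq l1 l2 a i c s * cofq l1 l2 a j c s).
Definition mfdq l1 l2 i j c s :=
  sum3 (fun a => cofdq l1 l2 a i c s * cofq l1 l2 a j c s + cofq l1 l2 a i c s * cofdq l1 l2 a j c s).
Definition miq l1 l2 k l c s := sum3 (fun a => frq l1 l2 a k c s * frq l1 l2 a l c s).
Definition dgfq l1 l2 (m i j : nat) c s := match m with 0%nat | 1%nat => 0 | _ => mfdq l1 l2 i j c s end.
Definition Gmq l1 l2 k i j c s :=
  / 2 * sum3 (fun l => miq l1 l2 k l c s *
     (dgfq l1 l2 i j l c s + dgfq l1 l2 j i l c s - dgfq l1 l2 l i j c s)).

Definition Tq l1 l2 K B := l1 * l2 * K / (l1 + B).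
Definition Bdq l1 l2 K sb cb := K * (l1 ^ 2 - l2 ^ 2) * sb * cb.
Definition Bddq l1 l2 K B sb cb := K * (l1 ^ 2 - l2 ^ 2) * (cb ^ 2 - sb ^ 2) * B.
Definition Tdq l1 l2 K B sb cb := - (l1 * l2 * K) * Bdq l1 l2 K sb cb / (l1 + B) ^ 2.
Definition Tddq l1 l2 K B sb cb :=
  - (l1 * l2 * K) * (Bddq l1 l2 K B sb cb / (l1 + B) ^ 2 - 2 * Bdq l1 l2 K sb cb ^ 2 / (l1 + B) ^ 3).
Definition A1q l1 l2 c s sb cb := 1 / l1 * c * sb + 1 / l2 * s * cb.
Definition A2q l1 l2 c s sb cb := 1 / l1 * s * sb - 1 / l2 * c * cb.
Definition A1dq l1 l2 K c s B sb cb :=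
  let T := Tq l1 l2 K B in
  1 / l1 * (- s * T * sb + c * cb * B) + 1 / l2 * (c * T * cb - s * sb * B).
Definition A2dq l1 l2 K c s B sb cb :=
  let T := Tq l1 l2 K B in
  1 / l1 * (c * T * sb + s * cb * B) + 1 / l2 * (s * T * cb + c * sb * B).
Definition A1ddq l1 l2 K c s B sb cb :=
  let T := Tq l1 l2 K B in let Td := Tdq l1 l2 K B sb cb in let Bd := Bdq l1 l2 K sb cb in
  1 / l1 * (- c * T * T * sb - s * Td * sb - 2 * s * T * cb * B - c * sb * B * B + c * cb * Bd)
  + 1 / l2 * (- s * T * T * cb + c * Td * cb - 2 * c * T * sb * B - s * cb * B * B - s * sb * Bd).
Definition A2ddq l1 l2 K c s B sb cb :=
  let T := Tq l1 l2 K B in let Td := Tdq l1 l2 K B sb cb in let Bd := Bdq l1 l2 K sb cb in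
  1 / l1 * (- s * T * T * sb + c * Td * sb + 2 * c * T * cb * B - s * sb * B * B + s * cb * Bd)
  + 1 / l2 * (c * T * T * cb + s * Td * cb - 2 * s * T * sb * B + c * cb * B * B + c * sb * Bd).
Definition F1q l1 l2 K c s B sb cb := 1 / (l1 ^ 2 * l2) * A1q l1 l2 c s sb cb * Tq l1 l2 K B.
Definition F2q l1 l2 K c s B sb cb := 1 / (l1 ^ 2 * l2) * A2q l1 l2 c s sb cb * Tq l1 l2 K B.
Definition F1dq l1 l2 K c s B sb cb := 1 / (l1 ^ 2 * l2) *
  (A1dq l1 l2 K c s B sb cb * Tq l1 l2 K B + A1q l1 l2 c s sb cb * Tdq l1 l2 K B sb cb).
Definition F2dq l1 l2 K c s B sb cb := 1 / (l1 ^ 2 * l2) *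
  (A2dq l1 l2 K c s B sb cb * Tq l1 l2 K B + A2q l1 l2 c s sb cb * Tdq l1 l2 K B sb cb).
Definition F1ddq l1 l2 K c s B sb cb := 1 / (l1 ^ 2 * l2) *
  (A1ddq l1 l2 K c s B sb cb * Tq l1 l2 K B + 2 * A1dq l1 l2 K c s B sb cb * Tdq l1 l2 K B sb cb
   + A1q l1 l2 c s sb cb * Tddq l1 l2 K B sb cb).
Definition F2ddq l1 l2 K c s B sb cb := 1 / (l1 ^ 2 * l2) *
  (A2ddq l1 l2 K c s B sb cb * Tq l1 l2 K B + 2 * A2dq l1 l2 K c s B sb cb * Tdq l1 l2 K B sb cb
   + A2q l1 l2 c s sb cb * Tddq l1 l2 K B sb cb).

(* coordinate vectors; Ch = cosh(-l1 u), Sh = sinh(-l1 u) *)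
Definition XuQ l1 l2 K c s B sb cb Ch (Sh : R) : nat -> R := fun k =>
  match k with
  | 0%nat => F1q l1 l2 K c s B sb cb * (- l1 * Ch)
  | 1%nat => F2q l1 l2 K c s B sb cb * (- l1 * Ch)
  | _ => 0 end.
Definition XvQ l1 l2 K c s B sb cb (Ch : R) Sh : nat -> R := fun k =>
  match k with
  | 0%nat => F1dq l1 l2 K c s B sb cb * Sh
  | 1%nat => F2dq l1 l2 K c s B sb cb * Sh
  | _ => Tq l1 l2 K B end.
Definition XuuQ l1 l2 K c s B sb cb (Ch : R) Sh : nat -> R := fun k =>
  match k with
  | 0%nat => F1q l1 l2 K c s B sb cb * (l1 ^ 2 * Sh)
  | 1%nat => F2q l1 l2 K c s B sb cb * (l1 ^ 2 * Sh)
  | _ => 0 end.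
Definition XvvQ l1 l2 K c s B sb cb (Ch : R) Sh : nat -> R := fun k =>
  match k with
  | 0%nat => F1ddq l1 l2 K c s B sb cb * Sh
  | 1%nat => F2ddq l1 l2 K c s B sb cb * Sh
  | _ => Tdq l1 l2 K B sb cb end.
Definition covQ l1 l2 (k : nat) c s (A Y Z : nat -> R) :=
  A k + sum3 (fun i => sum3 (fun j => Gmq l1 l2 k i j c s * Y i * Z j)).
Definition innerQ l1 l2 c s (x y : nat -> R) :=
  sum3 (fun i => sum3 (fun j => mfq l1 l2 i j c s * x i * y j)).

Definition NQ l1 l2 c s sb cb Ch Sh : nat -> R := fun k =>
  match k with
  | 0%nat => 1 / l1 * c * (cb / Ch) + 1 / l2 * (- s) * (sb / Ch)
  | 1%nat => 1 / l1 * s * (cb / Ch) + 1 / l2 * c * (sb / Ch)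
  | _ => l1 * l2 * (- Sh / Ch) end.

Lemma alg_V0 l1 l2 K c s B sb cb Ch Sh : l1 <> 0 -> l2 <> 0 -> l1 + B <> 0 -> Ch <> 0 ->
  s ^ 2 - (1 - c ^ 2) = 0 -> sb ^ 2 - (1 - cb ^ 2) = 0 ->
  B ^ 2 - (l1 ^ 2 - K * (l1 ^ 2 * cb ^ 2 + l2 ^ 2 * sb ^ 2)) = 0 ->
  Ch ^ 2 - (Sh ^ 2 + 1) = 0 ->
  covQ l1 l2 0 c s (XuuQ l1 l2 K c s B sb cb Ch Sh) (XuQ l1 l2 K c s B sb cb Ch Sh) (XuQ l1 l2 K c s B sb cb Ch Sh) + covQ l1 l2 0 c s (XvvQ l1 l2 K c s B sb cb Ch Sh) (XvQ l1 l2 K c s B sb cb Ch Sh) (XvQ l1 l2 K c s B sb cb Ch Sh) = 0.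
Proof.
  intros Hl1 Hl2 HW HCh0 Hs Hsb HB HCh.
  transitivity (((- c * sb * K^3 * l1^7 * l2^10 * Sh + c * sb * K^3 * l1^9 * l2^8 * Sh + c * sb * cb^2 * K^3 * l1^7 * l2^10 * Sh - 2 * c * sb * cb^2 * K^3 * l1^9 * l2^8 * Sh + c * sb * cb^2 * K^3 * l1^11 * l2^6 * Sh - c * B * sb * K^2 * l1^8 * l2^8 * Sh + c * B * sb * K^2 * l1^10 * l2^6 * Sh - c * B * sb * K^3 * l1^6 * l2^10 * Sh + c * B * sb * K^3 * l1^8 * l2^8 * Sh + c * B * sb * cb^2 * K^3 * l1^6 * l2^10 * Sh - 2 * c * B * sb * cb^2 * K^3 * l1^8 * l2^8 * Sh + c * B * sb * cb^2 * K^3 * l1^10 * l2^6 * Sh - 2 * c * B^2 * sb * K^2 * l1^7 * l2^8 * Sh + 2 * c * B^2 * sb * K^2 * l1^9 * l2^6 * Sh - c * B^3 * sb * K^2 * l1^6 * l2^8 * Sh + c * B^3 * sb * K^2 * l1^8 * l2^6 * Sh - c^3 * sb * K^3 * l1^7 * l2^10 * Sh + c^3 * sb * K^3 * l1^9 * l2^8 * Sh + c^3 * sb * cb^2 * K^3 * l1^7 * l2^10 * Sh - 2 * c^3 * sb * cb^2 * K^3 * l1^9 * l2^8 * Sh + c^3 * sb * cb^2 * K^3 * l1^11 * l2^6 * Sh - c^3 * B * sb * K^2 * l1^8 * l2^8 * Sh + c^3 * B * sb * K^2 * l1^10 * l2^6 * Sh - c^3 * B * sb * K^3 * l1^6 *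 l2^10 * Sh + c^3 * B * sb * K^3 * l1^8 * l2^8 * Sh + c^3 * B * sb * cb^2 * K^3 * l1^6 * l2^10 * Sh - 2 * c^3 * B * sb * cb^2 * K^3 * l1^8 * l2^8 * Sh + c^3 * B * sb * cb^2 * K^3 * l1^10 * l2^6 * Sh - 2 * c^3 * B^2 * sb * K^2 * l1^7 * l2^8 * Sh + 2 * c^3 * B^2 * sb * K^2 * l1^9 * l2^6 * Sh - c^3 * B^3 * sb * K^2 * l1^6 * l2^8 * Sh + c^3 * B^3 * sb * K^2 * l1^8 * l2^6 * Sh + s * cb * K^3 * l1^10 * l2^7 * Sh - s * cb * K^3 * l1^12 * l2^5 * Sh + s * sb^2 * cb * K^3 * l1^8 * l2^9 * Sh - 2 * s * sb^2 * cb * K^3 * l1^10 * l2^7 * Sh + s * sb^2 * cb * K^3 * l1^12 * l2^5 * Sh + s * B * cb * K^2 * l1^9 * l2^7 * Sh - s * B * cb * K^2 * l1^11 * l2^5 * Sh + s * B * cb * K^3 * l1^9 * l2^7 * Sh - s * B * cb * K^3 * l1^11 * l2^5 * Sh + s * B * sb^2 * cb * K^3 * l1^7 * l2^9 * Sh - 2 * s * B * sb^2 * cb * K^3 * l1^9 * l2^7 * Sh + s * B * sb^2 * cb * K^3 * l1^11 * l2^5 * Sh + 2 * s * B^2 * cb * K^2 * l1^8 * l2^7 * Sh - 2 * s * B^2 * cb * K^2 * l1^10 * l2^5 * Sh + s * B^3 * cb * K^2 * l1^7 * l2^7 * Sh - s * B^3 * cb * K^2 * l1^9 * l2^5 * Sh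 + s * c^2 * cb * K^3 * l1^10 * l2^7 * Sh - s * c^2 * cb * K^3 * l1^12 * l2^5 * Sh + s * c^2 * sb^2 * cb * K^3 * l1^8 * l2^9 * Sh - 2 * s * c^2 * sb^2 * cb * K^3 * l1^10 * l2^7 * Sh + s * c^2 * sb^2 * cb * K^3 * l1^12 * l2^5 * Sh + s * c^2 * B * cb * K^2 * l1^9 * l2^7 * Sh - s * c^2 * B * cb * K^2 * l1^11 * l2^5 * Sh + s * c^2 * B * cb * K^3 * l1^9 * l2^7 * Sh - s * c^2 * B * cb * K^3 * l1^11 * l2^5 * Sh + s * c^2 * B * sb^2 * cb * K^3 * l1^7 * l2^9 * Sh - 2 * s * c^2 * B * sb^2 * cb * K^3 * l1^9 * l2^7 * Sh + s * c^2 * B * sb^2 * cb * K^3 * l1^11 * l2^5 * Sh + 2 * s * c^2 * B^2 * cb * K^2 * l1^8 * l2^7 * Sh - 2 * s * c^2 * B^2 * cb * K^2 * l1^10 * l2^5 * Sh + s * c^2 * B^3 * cb * K^2 * l1^7 * l2^7 * Sh - s * c^2 * B^3 * cb * K^2 * l1^9 * l2^5 * Sh - s^2 * c * sb * K^3 * l1^7 * l2^10 * Sh + s^2 * c * sb * K^3 * l1^9 * l2^8 * Sh + s^2 * c * sb * cb^2 * K^3 * l1^7 * l2^10 * Sh - 2 * s^2 * c * sb * cb^2 * K^3 * l1^9 * l2^8 * Sh + s^2 * c * sb * cb^2 * K^3 * l1^11 * l2^6 * Sh - s^2 * c * B * sb * K^2 * l1^8 * l2^8 * Sh + s^2 * c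 * B * sb * K^2 * l1^10 * l2^6 * Sh - s^2 * c * B * sb * K^3 * l1^6 * l2^10 * Sh + s^2 * c * B * sb * K^3 * l1^8 * l2^8 * Sh + s^2 * c * B * sb * cb^2 * K^3 * l1^6 * l2^10 * Sh - 2 * s^2 * c * B * sb * cb^2 * K^3 * l1^8 * l2^8 * Sh + s^2 * c * B * sb * cb^2 * K^3 * l1^10 * l2^6 * Sh - 2 * s^2 * c * B^2 * sb * K^2 * l1^7 * l2^8 * Sh + 2 * s^2 * c * B^2 * sb * K^2 * l1^9 * l2^6 * Sh - s^2 * c * B^3 * sb * K^2 * l1^6 * l2^8 * Sh + s^2 * c * B^3 * sb * K^2 * l1^8 * l2^6 * Sh + s^3 * cb * K^3 * l1^10 * l2^7 * Sh - s^3 * cb * K^3 * l1^12 * l2^5 * Sh + s^3 * sb^2 * cb * K^3 * l1^8 * l2^9 * Sh - 2 * s^3 * sb^2 * cb * K^3 * l1^10 * l2^7 * Sh + s^3 * sb^2 * cb * K^3 * l1^12 * l2^5 * Sh + s^3 * B * cb * K^2 * l1^9 * l2^7 * Sh - s^3 * B * cb * K^2 * l1^11 * l2^5 * Sh + s^3 * B * cb * K^3 * l1^9 * l2^7 * Sh - s^3 * B * cb * K^3 * l1^11 * l2^5 * Sh + s^3 * B * sb^2 * cb * K^3 * l1^7 * l2^9 * Sh - 2 * s^3 * B * sb^2 * cb * K^3 * l1^9 * l2^7 * Sh + s^3 * B * sb^2 * cb * K^3 * l1^11 * l2^5 * Sh + 2 * s^3 * B^2 * cb * K^2 * l1^8 *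 l2^7 * Sh - 2 * s^3 * B^2 * cb * K^2 * l1^10 * l2^5 * Sh + s^3 * B^3 * cb * K^2 * l1^7 * l2^7 * Sh - s^3 * B^3 * cb * K^2 * l1^9 * l2^5 * Sh) * (s ^ 2 - (1 - c ^ 2)) + (c * sb * K^2 * l1^9 * l2^8 * Sh + c * sb * K^3 * l1^7 * l2^10 * Sh - 2 * c * sb * cb^2 * K^3 * l1^9 * l2^8 * Sh + 2 * c * sb * cb^2 * K^3 * l1^11 * l2^6 * Sh + 2 * c * B * sb * K^2 * l1^8 * l2^8 * Sh + c * B * sb * K^2 * l1^10 * l2^6 * Sh + c * B * sb * K^3 * l1^6 * l2^10 * Sh - 2 * c * B * sb * cb^2 * K^3 * l1^8 * l2^8 * Sh + 2 * c * B * sb * cb^2 * K^3 * l1^10 * l2^6 * Sh + c * B^2 * sb * K^2 * l1^7 * l2^8 * Sh + 2 * c * B^2 * sb * K^2 * l1^9 * l2^6 * Sh + c * B^3 * sb * K^2 * l1^8 * l2^6 * Sh + 2 * s * cb * K^2 * l1^10 * l2^7 * Sh - s * cb * K^2 * l1^12 * l2^5 * Sh + s * cb * K^3 * l1^12 * l2^5 * Sh - 2 * s * cb^3 * K^3 * l1^10 * l2^7 * Sh + 2 * s * cb^3 * K^3 * l1^12 * l2^5 * Sh + 3 * s * B * cb * K^2 * l1^9 * l2^7 * Sh + s * B * cb * K^3 * l1^11 * l2^5 * Sh - 2 * s * B * cb^3 * K^3 * l1^9 * l2^7 * Sh + 2 * s * B * cb^3 * K^3 * l1^11 * l2^5 *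 Sh + 3 * s * B^2 * cb * K^2 * l1^10 * l2^5 * Sh - s * B^3 * cb * K^2 * l1^7 * l2^7 * Sh + 2 * s * B^3 * cb * K^2 * l1^9 * l2^5 * Sh) * (sb ^ 2 - (1 - cb ^ 2)) + (- c * sb * K * l1^9 * l2^6 * Sh - c * sb * K^2 * l1^7 * l2^8 * Sh + 2 * c * sb * cb^2 * K^2 * l1^7 * l2^8 * Sh - 2 * c * sb * cb^2 * K^2 * l1^9 * l2^6 * Sh - 3 * c * B * sb * K * l1^8 * l2^6 * Sh - c * B * sb * K^2 * l1^6 * l2^8 * Sh + 2 * c * B * sb * cb^2 * K^2 * l1^6 * l2^8 * Sh - 2 * c * B * sb * cb^2 * K^2 * l1^8 * l2^6 * Sh - 3 * c * B^2 * sb * K * l1^7 * l2^6 * Sh - c * B^3 * sb * K * l1^6 * l2^6 * Sh - s * cb * K * l1^10 * l2^5 * Sh - 2 * s * cb * K^2 * l1^8 * l2^7 * Sh + s * cb * K^2 * l1^10 * l2^5 * Sh + 2 * s * cb^3 * K^2 * l1^8 * l2^7 * Sh - 2 * s * cb^3 * K^2 * l1^10 * l2^5 * Sh - 3 * s * B * cb * K * l1^9 * l2^5 * Sh - 2 * s * B * cb * K^2 * l1^7 * l2^7 * Sh + s * B * cb * K^2 * l1^9 * l2^5 * Sh + 2 * s * B * cb^3 * K^2 * l1^7 * l2^7 * Sh - 2 * s * B * cb^3 * K^2 * l1^9 * l2^5 * Sh - 3 * s * B^2 * cb * K * l1^8 * l2^5 * Sh - s * B^3 * cb * K * l1^7 *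 l2^5 * Sh) * (B ^ 2 - (l1 ^ 2 - K * (l1 ^ 2 * cb ^ 2 + l2 ^ 2 * sb ^ 2)))) / (l1 ^ 8 * l2 ^ 6 * (l1 + B) ^ 4 * Ch ^ 0)).
  - unfold NQ, covQ, innerQ, XuQ, XvQ, XuuQ, XvvQ, Gmq, miq, dgfq, mfdq, mfq, cofq, cofdq, frq, sum3, F1q, F2q, F1dq, F2dq, F1ddq, F2ddq, A1q, A2q, A1dq, A2dq, A1ddq, A2ddq, Tq, Tdq, Tddq, Bdq, Bddq. field. repeat split; assumption.
  - rewrite ?Hs, ?Hsb, ?HB, ?HCh. unfold Rdiv. ring.
Qed.
Lemma alg_V1 l1 l2 K c s B sb cb Ch Sh : l1 <> 0 -> l2 <> 0 -> l1 + B <> 0 -> Ch <> 0 ->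
  s ^ 2 - (1 - c ^ 2) = 0 -> sb ^ 2 - (1 - cb ^ 2) = 0 ->
  B ^ 2 - (l1 ^ 2 - K * (l1 ^ 2 * cb ^ 2 + l2 ^ 2 * sb ^ 2)) = 0 ->
  Ch ^ 2 - (Sh ^ 2 + 1) = 0 ->
  covQ l1 l2 1 c s (XuuQ l1 l2 K c s B sb cb Ch Sh) (XuQ l1 l2 K c s B sb cb Ch Sh) (XuQ l1 l2 K c s B sb cb Ch Sh) + covQ l1 l2 1 c s (XvvQ l1 l2 K c s B sb cb Ch Sh) (XvQ l1 l2 K c s B sb cb Ch Sh) (XvQ l1 l2 K c s B sb cb Ch Sh) = 0.
Proof.
  intros Hl1 Hl2 HW HCh0 Hs Hsb HB HCh.
  transitivity (((- c * cb * K^3 * l1^10 * l2^7 * Sh + c * cb * K^3 * l1^12 * l2^5 * Sh - c * sb^2 * cb * K^3 * l1^8 * l2^9 * Sh + 2 * c * sb^2 * cb * K^3 * l1^10 * l2^7 * Sh - c * sb^2 * cb * K^3 * l1^12 * l2^5 * Sh - c * B * cb * K^2 * l1^9 * l2^7 * Sh + c * B * cb * K^2 * l1^11 * l2^5 * Sh - c * B * cb * K^3 * l1^9 * l2^7 * Sh + c * B * cb * K^3 * l1^11 * l2^5 * Sh - c * B * sb^2 * cb * K^3 * l1^7 * l2^9 * Sh + 2 * c * B * sb^2 * cb * K^3 * l1^9 * l2^7 * Sh - c * B * sb^2 * cb * K^3 * l1^11 * l2^5 * Sh - 2 * c * B^2 * cb * K^2 * l1^8 * l2^7 * Sh + 2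 * c * B^2 * cb * K^2 * l1^10 * l2^5 * Sh - c * B^3 * cb * K^2 * l1^7 * l2^7 * Sh + c * B^3 * cb * K^2 * l1^9 * l2^5 * Sh - c^3 * cb * K^3 * l1^10 * l2^7 * Sh + c^3 * cb * K^3 * l1^12 * l2^5 * Sh - c^3 * sb^2 * cb * K^3 * l1^8 * l2^9 * Sh + 2 * c^3 * sb^2 * cb * K^3 * l1^10 * l2^7 * Sh - c^3 * sb^2 * cb * K^3 * l1^12 * l2^5 * Sh - c^3 * B * cb * K^2 * l1^9 * l2^7 * Sh + c^3 * B * cb * K^2 * l1^11 * l2^5 * Sh - c^3 * B * cb * K^3 * l1^9 * l2^7 * Sh + c^3 * B * cb * K^3 * l1^11 * l2^5 * Sh - c^3 * B * sb^2 * cb * K^3 * l1^7 * l2^9 * Sh + 2 * c^3 * B * sb^2 * cb * K^3 * l1^9 * l2^7 * Sh - c^3 * B * sb^2 * cb * K^3 * l1^11 * l2^5 * Sh - 2 * c^3 * B^2 * cb * K^2 * l1^8 * l2^7 * Sh + 2 * c^3 * B^2 * cb * K^2 * l1^10 * l2^5 * Sh - c^3 * B^3 * cb * K^2 * l1^7 * l2^7 * Sh + c^3 * B^3 * cb * K^2 * l1^9 * l2^5 * Sh - s * sb * K^3 * l1^7 * l2^10 * Sh + s * sb * K^3 * l1^9 * l2^8 * Sh + s * sb * cb^2 * K^3 * l1^7 * l2^10 * Sh - 2 * s * sb * cb^2 * K^3 * l1^9 * l2^8 * Sh + s * sb * cb^2 * K^3 * l1^11 * l2^6 * Sh - s * B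 * sb * K^2 * l1^8 * l2^8 * Sh + s * B * sb * K^2 * l1^10 * l2^6 * Sh - s * B * sb * K^3 * l1^6 * l2^10 * Sh + s * B * sb * K^3 * l1^8 * l2^8 * Sh + s * B * sb * cb^2 * K^3 * l1^6 * l2^10 * Sh - 2 * s * B * sb * cb^2 * K^3 * l1^8 * l2^8 * Sh + s * B * sb * cb^2 * K^3 * l1^10 * l2^6 * Sh - 2 * s * B^2 * sb * K^2 * l1^7 * l2^8 * Sh + 2 * s * B^2 * sb * K^2 * l1^9 * l2^6 * Sh - s * B^3 * sb * K^2 * l1^6 * l2^8 * Sh + s * B^3 * sb * K^2 * l1^8 * l2^6 * Sh - s * c^2 * sb * K^3 * l1^7 * l2^10 * Sh + s * c^2 * sb * K^3 * l1^9 * l2^8 * Sh + s * c^2 * sb * cb^2 * K^3 * l1^7 * l2^10 * Sh - 2 * s * c^2 * sb * cb^2 * K^3 * l1^9 * l2^8 * Sh + s * c^2 * sb * cb^2 * K^3 * l1^11 * l2^6 * Sh - s * c^2 * B * sb * K^2 * l1^8 * l2^8 * Sh + s * c^2 * B * sb * K^2 * l1^10 * l2^6 * Sh - s * c^2 * B * sb * K^3 * l1^6 * l2^10 * Sh + s * c^2 * B * sb * K^3 * l1^8 * l2^8 * Sh + s * c^2 * B * sb * cb^2 * K^3 * l1^6 * l2^10 * Sh - 2 * s * c^2 * B * sb * cb^2 * K^3 * l1^8 * l2^8 * Sh + s * c^2 * B * sb * cb^2 * K^3 * l1^10 * l2^6 * Sh - 2 * s * c^2 * B^2 * sb * K^2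 * l1^7 * l2^8 * Sh + 2 * s * c^2 * B^2 * sb * K^2 * l1^9 * l2^6 * Sh - s * c^2 * B^3 * sb * K^2 * l1^6 * l2^8 * Sh + s * c^2 * B^3 * sb * K^2 * l1^8 * l2^6 * Sh - s^2 * c * cb * K^3 * l1^10 * l2^7 * Sh + s^2 * c * cb * K^3 * l1^12 * l2^5 * Sh - s^2 * c * sb^2 * cb * K^3 * l1^8 * l2^9 * Sh + 2 * s^2 * c * sb^2 * cb * K^3 * l1^10 * l2^7 * Sh - s^2 * c * sb^2 * cb * K^3 * l1^12 * l2^5 * Sh - s^2 * c * B * cb * K^2 * l1^9 * l2^7 * Sh + s^2 * c * B * cb * K^2 * l1^11 * l2^5 * Sh - s^2 * c * B * cb * K^3 * l1^9 * l2^7 * Sh + s^2 * c * B * cb * K^3 * l1^11 * l2^5 * Sh - s^2 * c * B * sb^2 * cb * K^3 * l1^7 * l2^9 * Sh + 2 * s^2 * c * B * sb^2 * cb * K^3 * l1^9 * l2^7 * Sh - s^2 * c * B * sb^2 * cb * K^3 * l1^11 * l2^5 * Sh - 2 * s^2 * c * B^2 * cb * K^2 * l1^8 * l2^7 * Sh + 2 * s^2 * c * B^2 * cb * K^2 * l1^10 * l2^5 * Sh - s^2 * c * B^3 * cb * K^2 * l1^7 * l2^7 * Sh + s^2 * c * B^3 * cb * K^2 * l1^9 * l2^5 * Sh - s^3 * sb * K^3 * l1^7 * l2^10 * Sh + s^3 * sb * K^3 * l1^9 * l2^8 * Sh + s^3 * sb * cb^2 * K^3 * l1^7 * l2^10 *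 Sh - 2 * s^3 * sb * cb^2 * K^3 * l1^9 * l2^8 * Sh + s^3 * sb * cb^2 * K^3 * l1^11 * l2^6 * Sh - s^3 * B * sb * K^2 * l1^8 * l2^8 * Sh + s^3 * B * sb * K^2 * l1^10 * l2^6 * Sh - s^3 * B * sb * K^3 * l1^6 * l2^10 * Sh + s^3 * B * sb * K^3 * l1^8 * l2^8 * Sh + s^3 * B * sb * cb^2 * K^3 * l1^6 * l2^10 * Sh - 2 * s^3 * B * sb * cb^2 * K^3 * l1^8 * l2^8 * Sh + s^3 * B * sb * cb^2 * K^3 * l1^10 * l2^6 * Sh - 2 * s^3 * B^2 * sb * K^2 * l1^7 * l2^8 * Sh + 2 * s^3 * B^2 * sb * K^2 * l1^9 * l2^6 * Sh - s^3 * B^3 * sb * K^2 * l1^6 * l2^8 * Sh + s^3 * B^3 * sb * K^2 * l1^8 * l2^6 * Sh) * (s ^ 2 - (1 - c ^ 2)) + (- 2 * c * cb * K^2 * l1^10 * l2^7 * Sh + c * cb * K^2 * l1^12 * l2^5 * Sh - c * cb * K^3 * l1^12 * l2^5 * Sh + 2 * c * cb^3 * K^3 * l1^10 * l2^7 * Sh - 2 * c * cb^3 * K^3 * l1^12 * l2^5 * Sh - 3 * c * B * cb * K^2 * l1^9 * l2^7 * Sh - c * B * cb * K^3 * l1^11 * l2^5 * Sh + 2 * c * B * cb^3 * K^3 * l1^9 * l2^7 * Sh - 2 * c * B * cb^3 * K^3 * l1^11 * l2^5 * Sh - 3 * c * B^2 * cb * K^2 * l1^10 * l2^5 * Sh +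 c * B^3 * cb * K^2 * l1^7 * l2^7 * Sh - 2 * c * B^3 * cb * K^2 * l1^9 * l2^5 * Sh + s * sb * K^2 * l1^9 * l2^8 * Sh + s * sb * K^3 * l1^7 * l2^10 * Sh - 2 * s * sb * cb^2 * K^3 * l1^9 * l2^8 * Sh + 2 * s * sb * cb^2 * K^3 * l1^11 * l2^6 * Sh + 2 * s * B * sb * K^2 * l1^8 * l2^8 * Sh + s * B * sb * K^2 * l1^10 * l2^6 * Sh + s * B * sb * K^3 * l1^6 * l2^10 * Sh - 2 * s * B * sb * cb^2 * K^3 * l1^8 * l2^8 * Sh + 2 * s * B * sb * cb^2 * K^3 * l1^10 * l2^6 * Sh + s * B^2 * sb * K^2 * l1^7 * l2^8 * Sh + 2 * s * B^2 * sb * K^2 * l1^9 * l2^6 * Sh + s * B^3 * sb * K^2 * l1^8 * l2^6 * Sh) * (sb ^ 2 - (1 - cb ^ 2)) + (c * cb * K * l1^10 * l2^5 * Sh + 2 * c * cb * K^2 * l1^8 * l2^7 * Sh - c * cb * K^2 * l1^10 * l2^5 * Sh - 2 * c * cb^3 * K^2 * l1^8 * l2^7 * Sh + 2 * c * cb^3 * K^2 * l1^10 * l2^5 * Sh + 3 * c * B * cb * K * l1^9 * l2^5 * Sh + 2 * c * B * cb * K^2 * l1^7 * l2^7 * Sh - c * B * cb * K^2 * l1^9 * l2^5 * Sh - 2 * c * B * cb^3 * K^2 * l1^7 * l2^7 * Sh + 2 * c * B * cb^3 * K^2 * l1^9 * l2^5 * Sh + 3 * c * B^2 * cb * K * l1^8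 * l2^5 * Sh + c * B^3 * cb * K * l1^7 * l2^5 * Sh - s * sb * K * l1^9 * l2^6 * Sh - s * sb * K^2 * l1^7 * l2^8 * Sh + 2 * s * sb * cb^2 * K^2 * l1^7 * l2^8 * Sh - 2 * s * sb * cb^2 * K^2 * l1^9 * l2^6 * Sh - 3 * s * B * sb * K * l1^8 * l2^6 * Sh - s * B * sb * K^2 * l1^6 * l2^8 * Sh + 2 * s * B * sb * cb^2 * K^2 * l1^6 * l2^8 * Sh - 2 * s * B * sb * cb^2 * K^2 * l1^8 * l2^6 * Sh - 3 * s * B^2 * sb * K * l1^7 * l2^6 * Sh - s * B^3 * sb * K * l1^6 * l2^6 * Sh) * (B ^ 2 - (l1 ^ 2 - K * (l1 ^ 2 * cb ^ 2 + l2 ^ 2 * sb ^ 2)))) / (l1 ^ 8 * l2 ^ 6 * (l1 + B) ^ 4 * Ch ^ 0)).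
  - unfold NQ, covQ, innerQ, XuQ, XvQ, XuuQ, XvvQ, Gmq, miq, dgfq, mfdq, mfq, cofq, cofdq, frq, sum3, F1q, F2q, F1dq, F2dq, F1ddq, F2ddq, A1q, A2q, A1dq, A2dq, A1ddq, A2ddq, Tq, Tdq, Tddq, Bdq, Bddq. field. repeat split; assumption.
  - rewrite ?Hs, ?Hsb, ?HB, ?HCh. unfold Rdiv. ring.
Qed.
Lemma alg_V2 l1 l2 K c s B sb cb Ch Sh : l1 <> 0 -> l2 <> 0 -> l1 + B <> 0 -> Ch <> 0 ->
  s ^ 2 - (1 - c ^ 2) = 0 -> sb ^ 2 - (1 - cb ^ 2) = 0 ->
  B ^ 2 - (l1 ^ 2 - K * (l1 ^ 2 * cb ^ 2 + l2 ^ 2 * sb ^ 2)) = 0 ->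
  Ch ^ 2 - (Sh ^ 2 + 1) = 0 ->
  covQ l1 l2 2 c s (XuuQ l1 l2 K c s B sb cb Ch Sh) (XuQ l1 l2 K c s B sb cb Ch Sh) (XuQ l1 l2 K c s B sb cb Ch Sh) + covQ l1 l2 2 c s (XvvQ l1 l2 K c s B sb cb Ch Sh) (XvQ l1 l2 K c s B sb cb Ch Sh) (XvQ l1 l2 K c s B sb cb Ch Sh) = 0.
Proof.
  intros Hl1 Hl2 HW HCh0 Hs Hsb HB HCh.
  transitivity (((- sb * cb * K^2 * l1^10 * l2^8 * Ch^2 + sb * cb * K^2 * l1^12 * l2^6 * Ch^2 + sb * cb * K^4 * l1^8 * l2^10 * Sh^2 - sb * cb * K^4 * l1^10 * l2^8 * Sh^2 - sb * cb^3 * K^4 * l1^8 * l2^10 * Sh^2 + 2 * sb * cb^3 * K^4 * l1^10 * l2^8 * Sh^2 - sb * cb^3 * K^4 * l1^12 * l2^6 * Sh^2 + sb^3 * cb * K^4 * l1^6 * l2^12 * Sh^2 - 2 * sb^3 * cb * K^4 * l1^8 * l2^10 * Sh^2 + sb^3 * cb * K^4 * l1^10 * l2^8 * Sh^2 - sb^3 * cb^3 * K^4 * l1^6 * l2^12 * Sh^2 + 3 * sb^3 * cb^3 * K^4 * l1^8 * l2^10 * Sh^2 - 3 * sb^3 * cb^3 * K^4 * l1^10 * l2^8 * Sh^2 + sb^3 * cb^3 * K^4 * l1^12 * l2^6 * Sh^2 - 2 * B * sb * cb * K^2 * l1^9 * l2^8 * Ch^2 + 2 * B * sb * cb * K^2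 * l1^11 * l2^6 * Ch^2 + B * sb * cb * K^3 * l1^7 * l2^10 * Sh^2 - B * sb * cb * K^3 * l1^11 * l2^6 * Sh^2 - B * sb * cb^3 * K^3 * l1^7 * l2^10 * Sh^2 + 2 * B * sb * cb^3 * K^3 * l1^9 * l2^8 * Sh^2 - B * sb * cb^3 * K^3 * l1^11 * l2^6 * Sh^2 + B * sb^3 * cb * K^3 * l1^7 * l2^10 * Sh^2 - 2 * B * sb^3 * cb * K^3 * l1^9 * l2^8 * Sh^2 + B * sb^3 * cb * K^3 * l1^11 * l2^6 * Sh^2 + B^2 * sb * cb * K^2 * l1^8 * l2^8 * Sh^2 - B^2 * sb * cb * K^2 * l1^8 * l2^8 * Ch^2 - B^2 * sb * cb * K^2 * l1^10 * l2^6 * Sh^2 + B^2 * sb * cb * K^2 * l1^10 * l2^6 * Ch^2 + B^2 * sb * cb * K^3 * l1^6 * l2^10 * Sh^2 - B^2 * sb * cb * K^3 * l1^10 * l2^6 * Sh^2 - B^2 * sb * cb^3 * K^3 * l1^6 * l2^10 * Sh^2 + 2 * B^2 * sb * cb^3 * K^3 * l1^8 * l2^8 * Sh^2 - B^2 * sb * cb^3 * K^3 * l1^10 * l2^6 * Sh^2 + B^2 * sb^3 * cb * K^3 * l1^6 * l2^10 * Sh^2 - 2 * B^2 * sb^3 * cb * K^3 * l1^8 * l2^8 * Sh^2 + B^2 * sb^3 * cb * K^3 * l1^10 * l2^6 * Sh^2 + 2 * B^3 * sb * cb * K^2 * l1^7 * l2^8 * Sh^2 - 2 * B^3 * sb *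 cb * K^2 * l1^9 * l2^6 * Sh^2 + B^4 * sb * cb * K^2 * l1^6 * l2^8 * Sh^2 - B^4 * sb * cb * K^2 * l1^8 * l2^6 * Sh^2 - c^2 * sb * cb * K^2 * l1^10 * l2^8 * Ch^2 + c^2 * sb * cb * K^2 * l1^12 * l2^6 * Ch^2 + c^2 * sb * cb * K^4 * l1^8 * l2^10 * Sh^2 - c^2 * sb * cb * K^4 * l1^10 * l2^8 * Sh^2 - c^2 * sb * cb^3 * K^4 * l1^8 * l2^10 * Sh^2 + 2 * c^2 * sb * cb^3 * K^4 * l1^10 * l2^8 * Sh^2 - c^2 * sb * cb^3 * K^4 * l1^12 * l2^6 * Sh^2 + c^2 * sb^3 * cb * K^4 * l1^6 * l2^12 * Sh^2 - 2 * c^2 * sb^3 * cb * K^4 * l1^8 * l2^10 * Sh^2 + c^2 * sb^3 * cb * K^4 * l1^10 * l2^8 * Sh^2 - c^2 * sb^3 * cb^3 * K^4 * l1^6 * l2^12 * Sh^2 + 3 * c^2 * sb^3 * cb^3 * K^4 * l1^8 * l2^10 * Sh^2 - 3 * c^2 * sb^3 * cb^3 * K^4 * l1^10 * l2^8 * Sh^2 + c^2 * sb^3 * cb^3 * K^4 * l1^12 * l2^6 * Sh^2 - 2 * c^2 * B * sb * cb * K^2 * l1^9 * l2^8 * Ch^2 + 2 * c^2 * B * sb * cb * K^2 * l1^11 * l2^6 * Ch^2 + c^2 * B * sb * cb * K^3 * l1^7 * l2^10 * Sh^2 - c^2 * B * sb * cb * K^3 * l1^11 * l2^6 * Sh^2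 - c^2 * B * sb * cb^3 * K^3 * l1^7 * l2^10 * Sh^2 + 2 * c^2 * B * sb * cb^3 * K^3 * l1^9 * l2^8 * Sh^2 - c^2 * B * sb * cb^3 * K^3 * l1^11 * l2^6 * Sh^2 + c^2 * B * sb^3 * cb * K^3 * l1^7 * l2^10 * Sh^2 - 2 * c^2 * B * sb^3 * cb * K^3 * l1^9 * l2^8 * Sh^2 + c^2 * B * sb^3 * cb * K^3 * l1^11 * l2^6 * Sh^2 + c^2 * B^2 * sb * cb * K^2 * l1^8 * l2^8 * Sh^2 - c^2 * B^2 * sb * cb * K^2 * l1^8 * l2^8 * Ch^2 - c^2 * B^2 * sb * cb * K^2 * l1^10 * l2^6 * Sh^2 + c^2 * B^2 * sb * cb * K^2 * l1^10 * l2^6 * Ch^2 + c^2 * B^2 * sb * cb * K^3 * l1^6 * l2^10 * Sh^2 - c^2 * B^2 * sb * cb * K^3 * l1^10 * l2^6 * Sh^2 - c^2 * B^2 * sb * cb^3 * K^3 * l1^6 * l2^10 * Sh^2 + 2 * c^2 * B^2 * sb * cb^3 * K^3 * l1^8 * l2^8 * Sh^2 - c^2 * B^2 * sb * cb^3 * K^3 * l1^10 * l2^6 * Sh^2 + c^2 * B^2 * sb^3 * cb * K^3 * l1^6 * l2^10 * Sh^2 - 2 * c^2 * B^2 * sb^3 * cb * K^3 * l1^8 * l2^8 * Sh^2 + c^2 * B^2 * sb^3 * cb * K^3 * l1^10 * l2^6 * Sh^2 + 2 * c^2 * B^3 * sb * cb * K^2 * l1^7 * l2^8 * Sh^2 -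 2 * c^2 * B^3 * sb * cb * K^2 * l1^9 * l2^6 * Sh^2 + c^2 * B^4 * sb * cb * K^2 * l1^6 * l2^8 * Sh^2 - c^2 * B^4 * sb * cb * K^2 * l1^8 * l2^6 * Sh^2 - s^2 * sb * cb * K^2 * l1^10 * l2^8 * Ch^2 + s^2 * sb * cb * K^2 * l1^12 * l2^6 * Ch^2 + s^2 * sb * cb * K^4 * l1^8 * l2^10 * Sh^2 - s^2 * sb * cb * K^4 * l1^10 * l2^8 * Sh^2 - s^2 * sb * cb^3 * K^4 * l1^8 * l2^10 * Sh^2 + 2 * s^2 * sb * cb^3 * K^4 * l1^10 * l2^8 * Sh^2 - s^2 * sb * cb^3 * K^4 * l1^12 * l2^6 * Sh^2 + s^2 * sb^3 * cb * K^4 * l1^6 * l2^12 * Sh^2 - 2 * s^2 * sb^3 * cb * K^4 * l1^8 * l2^10 * Sh^2 + s^2 * sb^3 * cb * K^4 * l1^10 * l2^8 * Sh^2 - s^2 * sb^3 * cb^3 * K^4 * l1^6 * l2^12 * Sh^2 + 3 * s^2 * sb^3 * cb^3 * K^4 * l1^8 * l2^10 * Sh^2 - 3 * s^2 * sb^3 * cb^3 * K^4 * l1^10 * l2^8 * Sh^2 + s^2 * sb^3 * cb^3 * K^4 * l1^12 * l2^6 * Sh^2 - 2 * s^2 * B * sb * cb * K^2 * l1^9 * l2^8 * Ch^2 + 2 * s^2 * B * sb * cb * K^2 * l1^11 * l2^6 * Ch^2 + s^2 * B * sb * cb * K^3 * l1^7 * l2^10 * Sh^2 - s^2 * B * sb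 * cb * K^3 * l1^11 * l2^6 * Sh^2 - s^2 * B * sb * cb^3 * K^3 * l1^7 * l2^10 * Sh^2 + 2 * s^2 * B * sb * cb^3 * K^3 * l1^9 * l2^8 * Sh^2 - s^2 * B * sb * cb^3 * K^3 * l1^11 * l2^6 * Sh^2 + s^2 * B * sb^3 * cb * K^3 * l1^7 * l2^10 * Sh^2 - 2 * s^2 * B * sb^3 * cb * K^3 * l1^9 * l2^8 * Sh^2 + s^2 * B * sb^3 * cb * K^3 * l1^11 * l2^6 * Sh^2 + s^2 * B^2 * sb * cb * K^2 * l1^8 * l2^8 * Sh^2 - s^2 * B^2 * sb * cb * K^2 * l1^8 * l2^8 * Ch^2 - s^2 * B^2 * sb * cb * K^2 * l1^10 * l2^6 * Sh^2 + s^2 * B^2 * sb * cb * K^2 * l1^10 * l2^6 * Ch^2 + s^2 * B^2 * sb * cb * K^3 * l1^6 * l2^10 * Sh^2 - s^2 * B^2 * sb * cb * K^3 * l1^10 * l2^6 * Sh^2 - s^2 * B^2 * sb * cb^3 * K^3 * l1^6 * l2^10 * Sh^2 + 2 * s^2 * B^2 * sb * cb^3 * K^3 * l1^8 * l2^8 * Sh^2 - s^2 * B^2 * sb * cb^3 * K^3 * l1^10 * l2^6 * Sh^2 + s^2 * B^2 * sb^3 * cb * K^3 * l1^6 * l2^10 * Sh^2 - 2 * s^2 * B^2 * sb^3 * cb * K^3 * l1^8 * l2^8 * Sh^2 + s^2 * B^2 * sb^3 * cb * K^3 * l1^10 * l2^6 * Sh^2 + 2 * s^2 * B^3 * sb *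 cb * K^2 * l1^7 * l2^8 * Sh^2 - 2 * s^2 * B^3 * sb * cb * K^2 * l1^9 * l2^6 * Sh^2 + s^2 * B^4 * sb * cb * K^2 * l1^6 * l2^8 * Sh^2 - s^2 * B^4 * sb * cb * K^2 * l1^8 * l2^6 * Sh^2) * (s ^ 2 - (1 - c ^ 2)) + (- sb * cb * K^3 * l1^8 * l2^10 - 2 * sb * cb * K^3 * l1^8 * l2^10 * Sh^2 + sb * cb * K^3 * l1^8 * l2^10 * Ch^2 + sb * cb * K^3 * l1^10 * l2^8 + 2 * sb * cb * K^3 * l1^10 * l2^8 * Sh^2 - sb * cb * K^3 * l1^10 * l2^8 * Ch^2 - sb * cb * K^4 * l1^8 * l2^10 * Sh^2 + sb * cb * K^4 * l1^10 * l2^8 * Sh^2 + sb * cb^3 * K^4 * l1^8 * l2^10 * Sh^2 - 2 * sb * cb^3 * K^4 * l1^10 * l2^8 * Sh^2 + sb * cb^3 * K^4 * l1^12 * l2^6 * Sh^2 - B * sb * cb * K^3 * l1^7 * l2^10 * Sh^2 + B * sb * cb * K^3 * l1^11 * l2^6 * Sh^2 - B^2 * sb * cb * K^3 * l1^8 * l2^8 * Sh^2 + B^2 * sb * cb * K^3 * l1^10 * l2^6 * Sh^2) * (sb ^ 2 - (1 - cb ^ 2)) + (sb * cb * K^2 * l1^8 * l2^8 + 2 * sb * cb * K^2 * l1^8 * l2^8 * Sh^2 - sb * cb * K^2 * l1^8 * l2^8 * Ch^2 - sb * cb * K^2 * l1^10 * l2^6 - 2 * sb * cb * K^2 * l1^10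 * l2^6 * Sh^2 + sb * cb * K^2 * l1^10 * l2^6 * Ch^2 + sb * cb * K^3 * l1^6 * l2^10 * Sh^2 - sb * cb * K^3 * l1^8 * l2^8 * Sh^2 - sb * cb^3 * K^3 * l1^6 * l2^10 * Sh^2 + 2 * sb * cb^3 * K^3 * l1^8 * l2^8 * Sh^2 - sb * cb^3 * K^3 * l1^10 * l2^6 * Sh^2 + 2 * B * sb * cb * K^2 * l1^7 * l2^8 * Sh^2 - 2 * B * sb * cb * K^2 * l1^9 * l2^6 * Sh^2 + B^2 * sb * cb * K^2 * l1^6 * l2^8 * Sh^2 - B^2 * sb * cb * K^2 * l1^8 * l2^6 * Sh^2) * (B ^ 2 - (l1 ^ 2 - K * (l1 ^ 2 * cb ^ 2 + l2 ^ 2 * sb ^ 2))) + (- 2 * sb * cb * K^2 * l1^10 * l2^8 + 2 * sb * cb * K^2 * l1^12 * l2^6 + sb * cb * K^3 * l1^8 * l2^10 - sb * cb * K^3 * l1^10 * l2^8 - sb * cb^3 * K^3 * l1^8 * l2^10 + 2 * sb * cb^3 * K^3 * l1^10 * l2^8 - sb * cb^3 * K^3 * l1^12 * l2^6 - 2 * B * sb * cb * K^2 * l1^9 * l2^8 + 2 * B * sb * cb * K^2 * l1^11 * l2^6) * (Ch ^ 2 - (Sh ^ 2 + 1))) / (l1 ^ 7 * l2 ^ 5 * (l1 + B) ^ 4 * Ch ^ 0)).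
  - unfold NQ, covQ, innerQ, XuQ, XvQ, XuuQ, XvvQ, Gmq, miq, dgfq, mfdq, mfq, cofq, cofdq, frq, sum3, F1q, F2q, F1dq, F2dq, F1ddq, F2ddq, A1q, A2q, A1dq, A2dq, A1ddq, A2ddq, Tq, Tdq, Tddq, Bdq, Bddq. field. repeat split; assumption.
  - rewrite ?Hs, ?Hsb, ?HB, ?HCh. unfold Rdiv. ring.
Qed.
Lemma alg_EG l1 l2 K c s B sb cb Ch Sh : l1 <> 0 -> l2 <> 0 -> l1 + B <> 0 -> Ch <> 0 ->
  s ^ 2 - (1 - c ^ 2) = 0 -> sb ^ 2 - (1 - cb ^ 2) = 0 ->
  B ^ 2 - (l1 ^ 2 - K * (l1 ^ 2 * cb ^ 2 + l2 ^ 2 * sb ^ 2)) = 0 ->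
  Ch ^ 2 - (Sh ^ 2 + 1) = 0 ->
  innerQ l1 l2 c s (XuQ l1 l2 K c s B sb cb Ch Sh) (XuQ l1 l2 K c s B sb cb Ch Sh) - innerQ l1 l2 c s (XvQ l1 l2 K c s B sb cb Ch Sh) (XvQ l1 l2 K c s B sb cb Ch Sh) = 0.
Proof.
  intros Hl1 Hl2 HW HCh0 Hs Hsb HB HCh.
  transitivity (((cb^2 * K^2 * l1^8 * l2^4 * Ch^2 - cb^2 * K^4 * l1^8 * l2^4 * Sh^2 + sb^2 * K^2 * l1^8 * l2^4 * Ch^2 - sb^2 * K^4 * l1^4 * l2^8 * Sh^2 + 2 * sb^2 * cb^2 * K^4 * l1^4 * l2^8 * Sh^2 - 4 * sb^2 * cb^2 * K^4 * l1^6 * l2^6 * Sh^2 + 2 * sb^2 * cb^2 * K^4 * l1^8 * l2^4 * Sh^2 - sb^2 * cb^4 * K^4 * l1^4 * l2^8 * Sh^2 + 2 * sb^2 * cb^4 * K^4 * l1^6 * l2^6 * Sh^2 - sb^2 * cb^4 * K^4 * l1^8 * l2^4 * Sh^2 - sb^4 * cb^2 * K^4 * l1^4 * l2^8 * Sh^2 + 2 * sb^4 * cb^2 * K^4 * l1^6 * l2^6 * Sh^2 - sb^4 * cb^2 * K^4 * l1^8 * l2^4 * Sh^2 + 2 * B * cb^2 * K^2 * l1^7 * l2^4 * Ch^2 - 2 * B * cb^2 * K^3 * l1^7 * l2^4 * Sh^2 + 2 * B * sb^2 * K^2 * l1^7 * l2^4 * Ch^2 - 2 * B * sb^2 * K^3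 * l1^5 * l2^6 * Sh^2 - B^2 * cb^2 * K^2 * l1^6 * l2^4 * Sh^2 + B^2 * cb^2 * K^2 * l1^6 * l2^4 * Ch^2 - 2 * B^2 * cb^2 * K^3 * l1^6 * l2^4 * Sh^2 - B^2 * sb^2 * K^2 * l1^6 * l2^4 * Sh^2 + B^2 * sb^2 * K^2 * l1^6 * l2^4 * Ch^2 - 2 * B^2 * sb^2 * K^3 * l1^4 * l2^6 * Sh^2 - 2 * B^3 * cb^2 * K^2 * l1^5 * l2^4 * Sh^2 - 2 * B^3 * sb^2 * K^2 * l1^5 * l2^4 * Sh^2 - B^4 * cb^2 * K^2 * l1^4 * l2^4 * Sh^2 - B^4 * sb^2 * K^2 * l1^4 * l2^4 * Sh^2 + c^2 * cb^2 * K^2 * l1^8 * l2^4 * Ch^2 - c^2 * cb^2 * K^4 * l1^8 * l2^4 * Sh^2 + c^2 * sb^2 * K^2 * l1^8 * l2^4 * Ch^2 - c^2 * sb^2 * K^4 * l1^4 * l2^8 * Sh^2 + 2 * c^2 * sb^2 * cb^2 * K^4 * l1^4 * l2^8 * Sh^2 - 4 * c^2 * sb^2 * cb^2 * K^4 * l1^6 * l2^6 * Sh^2 + 2 * c^2 * sb^2 * cb^2 * K^4 * l1^8 * l2^4 * Sh^2 - c^2 * sb^2 * cb^4 * K^4 * l1^4 * l2^8 * Sh^2 + 2 * c^2 * sb^2 * cb^4 * K^4 * l1^6 * l2^6 * Sh^2 - c^2 * sb^2 * cb^4 * K^4 * l1^8 * l2^4 * Sh^2 - c^2 * sb^4 *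 cb^2 * K^4 * l1^4 * l2^8 * Sh^2 + 2 * c^2 * sb^4 * cb^2 * K^4 * l1^6 * l2^6 * Sh^2 - c^2 * sb^4 * cb^2 * K^4 * l1^8 * l2^4 * Sh^2 + 2 * c^2 * B * cb^2 * K^2 * l1^7 * l2^4 * Ch^2 - 2 * c^2 * B * cb^2 * K^3 * l1^7 * l2^4 * Sh^2 + 2 * c^2 * B * sb^2 * K^2 * l1^7 * l2^4 * Ch^2 - 2 * c^2 * B * sb^2 * K^3 * l1^5 * l2^6 * Sh^2 - c^2 * B^2 * cb^2 * K^2 * l1^6 * l2^4 * Sh^2 + c^2 * B^2 * cb^2 * K^2 * l1^6 * l2^4 * Ch^2 - 2 * c^2 * B^2 * cb^2 * K^3 * l1^6 * l2^4 * Sh^2 - c^2 * B^2 * sb^2 * K^2 * l1^6 * l2^4 * Sh^2 + c^2 * B^2 * sb^2 * K^2 * l1^6 * l2^4 * Ch^2 - 2 * c^2 * B^2 * sb^2 * K^3 * l1^4 * l2^6 * Sh^2 - 2 * c^2 * B^3 * cb^2 * K^2 * l1^5 * l2^4 * Sh^2 - 2 * c^2 * B^3 * sb^2 * K^2 * l1^5 * l2^4 * Sh^2 - c^2 * B^4 * cb^2 * K^2 * l1^4 * l2^4 * Sh^2 - c^2 * B^4 * sb^2 * K^2 * l1^4 * l2^4 * Sh^2 + s^2 * cb^2 * K^2 * l1^8 * l2^4 * Ch^2 - s^2 * cb^2 * K^4 * l1^8 * l2^4 * Sh^2 + s^2 * sb^2 * K^2 * l1^8 * l2^4 * Ch^2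 - s^2 * sb^2 * K^4 * l1^4 * l2^8 * Sh^2 + 2 * s^2 * sb^2 * cb^2 * K^4 * l1^4 * l2^8 * Sh^2 - 4 * s^2 * sb^2 * cb^2 * K^4 * l1^6 * l2^6 * Sh^2 + 2 * s^2 * sb^2 * cb^2 * K^4 * l1^8 * l2^4 * Sh^2 - s^2 * sb^2 * cb^4 * K^4 * l1^4 * l2^8 * Sh^2 + 2 * s^2 * sb^2 * cb^4 * K^4 * l1^6 * l2^6 * Sh^2 - s^2 * sb^2 * cb^4 * K^4 * l1^8 * l2^4 * Sh^2 - s^2 * sb^4 * cb^2 * K^4 * l1^4 * l2^8 * Sh^2 + 2 * s^2 * sb^4 * cb^2 * K^4 * l1^6 * l2^6 * Sh^2 - s^2 * sb^4 * cb^2 * K^4 * l1^8 * l2^4 * Sh^2 + 2 * s^2 * B * cb^2 * K^2 * l1^7 * l2^4 * Ch^2 - 2 * s^2 * B * cb^2 * K^3 * l1^7 * l2^4 * Sh^2 + 2 * s^2 * B * sb^2 * K^2 * l1^7 * l2^4 * Ch^2 - 2 * s^2 * B * sb^2 * K^3 * l1^5 * l2^6 * Sh^2 - s^2 * B^2 * cb^2 * K^2 * l1^6 * l2^4 * Sh^2 + s^2 * B^2 * cb^2 * K^2 * l1^6 * l2^4 * Ch^2 - 2 * s^2 * B^2 * cb^2 * K^3 * l1^6 * l2^4 * Sh^2 - s^2 * B^2 * sb^2 * K^2 * l1^6 * l2^4 * Sh^2 + s^2 * B^2 * sb^2 * K^2 * l1^6 * l2^4 * Ch^2 - 2 * s^2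 * B^2 * sb^2 * K^3 * l1^4 * l2^6 * Sh^2 - 2 * s^2 * B^3 * cb^2 * K^2 * l1^5 * l2^4 * Sh^2 - 2 * s^2 * B^3 * sb^2 * K^2 * l1^5 * l2^4 * Sh^2 - s^2 * B^4 * cb^2 * K^2 * l1^4 * l2^4 * Sh^2 - s^2 * B^4 * sb^2 * K^2 * l1^4 * l2^4 * Sh^2) * (s ^ 2 - (1 - c ^ 2)) + (K^2 * l1^8 * l2^4 * Ch^2 + K^3 * l1^6 * l2^6 + 2 * K^3 * l1^6 * l2^6 * Sh^2 - K^3 * l1^6 * l2^6 * Ch^2 - cb^2 * K^4 * l1^6 * l2^6 * Sh^2 + cb^2 * K^4 * l1^8 * l2^4 * Sh^2 - sb^2 * cb^2 * K^4 * l1^4 * l2^8 * Sh^2 + 2 * sb^2 * cb^2 * K^4 * l1^6 * l2^6 * Sh^2 - sb^2 * cb^2 * K^4 * l1^8 * l2^4 * Sh^2 + 2 * B * K^2 * l1^7 * l2^4 * Ch^2 - B^2 * K^2 * l1^6 * l2^4 * Sh^2 + B^2 * K^2 * l1^6 * l2^4 * Ch^2 - B^2 * K^3 * l1^4 * l2^6 * Sh^2 - 2 * B^3 * K^2 * l1^5 * l2^4 * Sh^2 - B^4 * K^2 * l1^4 * l2^4 * Sh^2) * (sb ^ 2 - (1 - cb ^ 2)) + (- K^2 * l1^6 * l2^4 - 2 * K^2 * l1^6 * l2^4 * Sh^2 + K^2 * l1^6 * l2^4 * Ch^2 - K^3 * l1^4 * l2^6 * Sh^2 + cb^2 * K^3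 * l1^4 * l2^6 * Sh^2 - cb^2 * K^3 * l1^6 * l2^4 * Sh^2 - 2 * B * K^2 * l1^5 * l2^4 * Sh^2 - B^2 * K^2 * l1^4 * l2^4 * Sh^2) * (B ^ 2 - (l1 ^ 2 - K * (l1 ^ 2 * cb ^ 2 + l2 ^ 2 * sb ^ 2))) + (2 * K^2 * l1^8 * l2^4 - K^3 * l1^6 * l2^6 + cb^2 * K^3 * l1^6 * l2^6 - cb^2 * K^3 * l1^8 * l2^4 + 2 * B * K^2 * l1^7 * l2^4) * (Ch ^ 2 - (Sh ^ 2 + 1))) / (l1 ^ 6 * l2 ^ 4 * (l1 + B) ^ 4 * Ch ^ 0)).
  - unfold NQ, covQ, innerQ, XuQ, XvQ, XuuQ, XvvQ, Gmq, miq, dgfq, mfdq, mfq, cofq, cofdq, frq, sum3, F1q, F2q, F1dq, F2dq, F1ddq, F2ddq, A1q, A2q, A1dq, A2dq, A1ddq, A2ddq, Tq, Tdq, Tddq, Bdq, Bddq. field. repeat split; assumption.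
  - rewrite ?Hs, ?Hsb, ?HB, ?HCh. unfold Rdiv. ring.
Qed.
Lemma alg_F l1 l2 K c s B sb cb Ch Sh : l1 <> 0 -> l2 <> 0 -> l1 + B <> 0 -> Ch <> 0 ->
  s ^ 2 - (1 - c ^ 2) = 0 -> sb ^ 2 - (1 - cb ^ 2) = 0 ->
  B ^ 2 - (l1 ^ 2 - K * (l1 ^ 2 * cb ^ 2 + l2 ^ 2 * sb ^ 2)) = 0 ->
  Ch ^ 2 - (Sh ^ 2 + 1) = 0 ->
  innerQ l1 l2 c s (XuQ l1 l2 K c s B sb cb Ch Sh) (XvQ l1 l2 K c s B sb cb Ch Sh) = 0.
Proof.
  intros Hl1 Hl2 HW HCh0 Hs Hsb HB HCh.
  transitivity (((sb * cb * K^3 * l1^5 * l2^6 * Ch * Sh - sb * cb * K^3 * l1^7 * l2^4 * Ch * Sh - sb * cb^3 * K^3 * l1^5 * l2^6 * Ch * Sh + sb * cb^3 * K^3 * l1^7 * l2^4 * Ch * Sh - sb^3 * cb * K^3 * l1^5 * l2^6 * Ch * Sh + sb^3 * cb * K^3 * l1^7 * l2^4 * Ch * Sh + c^2 * sb * cb * K^3 * l1^5 * l2^6 * Ch * Sh - c^2 * sb * cb * K^3 * l1^7 * l2^4 * Ch * Sh - c^2 * sb * cb^3 * K^3 * l1^5 * l2^6 * Ch * Sh + c^2 * sb * cb^3 * K^3 * l1^7 * l2^4 * Ch * Sh - c^2 * sb^3 * cb * K^3 * l1^5 * l2^6 * Ch * Sh + c^2 * sb^3 * cb * K^3 * l1^7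 * l2^4 * Ch * Sh + s^2 * sb * cb * K^3 * l1^5 * l2^6 * Ch * Sh - s^2 * sb * cb * K^3 * l1^7 * l2^4 * Ch * Sh - s^2 * sb * cb^3 * K^3 * l1^5 * l2^6 * Ch * Sh + s^2 * sb * cb^3 * K^3 * l1^7 * l2^4 * Ch * Sh - s^2 * sb^3 * cb * K^3 * l1^5 * l2^6 * Ch * Sh + s^2 * sb^3 * cb * K^3 * l1^7 * l2^4 * Ch * Sh) * (s ^ 2 - (1 - c ^ 2)) + (- sb * cb * K^3 * l1^5 * l2^6 * Ch * Sh + sb * cb * K^3 * l1^7 * l2^4 * Ch * Sh) * (sb ^ 2 - (1 - cb ^ 2))) / (l1 ^ 6 * l2 ^ 4 * (l1 + B) ^ 3 * Ch ^ 0)).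
  - unfold NQ, covQ, innerQ, XuQ, XvQ, XuuQ, XvvQ, Gmq, miq, dgfq, mfdq, mfq, cofq, cofdq, frq, sum3, F1q, F2q, F1dq, F2dq, F1ddq, F2ddq, A1q, A2q, A1dq, A2dq, A1ddq, A2ddq, Tq, Tdq, Tddq, Bdq, Bddq. field. repeat split; assumption.
  - rewrite ?Hs, ?Hsb, ?HB, ?HCh. unfold Rdiv. ring.
Qed.
Lemma alg_N1 l1 l2 K c s B sb cb Ch Sh : l1 <> 0 -> l2 <> 0 -> l1 + B <> 0 -> Ch <> 0 ->
  s ^ 2 - (1 - c ^ 2) = 0 -> sb ^ 2 - (1 - cb ^ 2) = 0 ->
  B ^ 2 - (l1 ^ 2 - K * (l1 ^ 2 * cb ^ 2 + l2 ^ 2 * sb ^ 2)) = 0 ->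
  Ch ^ 2 - (Sh ^ 2 + 1) = 0 ->
  innerQ l1 l2 c s (NQ l1 l2 c s sb cb Ch Sh) (NQ l1 l2 c s sb cb Ch Sh) - 1 = 0.
Proof.
  intros Hl1 Hl2 HW HCh0 Hs Hsb HB HCh.
  transitivity (((cb^2 * l1^2 * l2^2 + sb^2 * l1^2 * l2^2 + c^2 * cb^2 * l1^2 * l2^2 + c^2 * sb^2 * l1^2 * l2^2 + s^2 * cb^2 * l1^2 * l2^2 + s^2 * sb^2 * l1^2 * l2^2) * (s ^ 2 - (1 - c ^ 2)) + (l1^2 * l2^2) * (sb ^ 2 - (1 - cb ^ 2)) + (- l1^2 * l2^2) * (Ch ^ 2 - (Sh ^ 2 + 1))) / (l1 ^ 2 * l2 ^ 2 * (l1 + B) ^ 0 * Ch ^ 2)).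
  - unfold NQ, covQ, innerQ, XuQ, XvQ, XuuQ, XvvQ, Gmq, miq, dgfq, mfdq, mfq, cofq, cofdq, frq, sum3, F1q, F2q, F1dq, F2dq, F1ddq, F2ddq, A1q, A2q, A1dq, A2dq, A1ddq, A2ddq, Tq, Tdq, Tddq, Bdq, Bddq. field. repeat split; assumption.
  - rewrite ?Hs, ?Hsb, ?HB, ?HCh. unfold Rdiv. ring.
Qed.
Lemma alg_N2 l1 l2 K c s B sb cb Ch Sh : l1 <> 0 -> l2 <> 0 -> l1 + B <> 0 -> Ch <> 0 ->
  s ^ 2 - (1 - c ^ 2) = 0 -> sb ^ 2 - (1 - cb ^ 2) = 0 ->
  B ^ 2 - (l1 ^ 2 - K * (l1 ^ 2 * cb ^ 2 + l2 ^ 2 * sb ^ 2)) = 0 ->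
  Ch ^ 2 - (Sh ^ 2 + 1) = 0 ->
  innerQ l1 l2 c s (NQ l1 l2 c s sb cb Ch Sh) (XuQ l1 l2 K c s B sb cb Ch Sh) = 0.
Proof.
  intros Hl1 Hl2 HW HCh0 Hs Hsb HB HCh.
  transitivity ((0) / (l1 ^ 4 * l2 ^ 3 * (l1 + B) ^ 1 * Ch ^ 1)).
  - unfold NQ, covQ, innerQ, XuQ, XvQ, XuuQ, XvvQ, Gmq, miq, dgfq, mfdq, mfq, cofq, cofdq, frq, sum3, F1q, F2q, F1dq, F2dq, F1ddq, F2ddq, A1q, A2q, A1dq, A2dq, A1ddq, A2ddq, Tq, Tdq, Tddq, Bdq, Bddq. field. repeat split; assumption.
  - rewrite ?Hs, ?Hsb, ?HB, ?HCh. unfold Rdiv. ring.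
Qed.
Lemma alg_N3 l1 l2 K c s B sb cb Ch Sh : l1 <> 0 -> l2 <> 0 -> l1 + B <> 0 -> Ch <> 0 ->
  s ^ 2 - (1 - c ^ 2) = 0 -> sb ^ 2 - (1 - cb ^ 2) = 0 ->
  B ^ 2 - (l1 ^ 2 - K * (l1 ^ 2 * cb ^ 2 + l2 ^ 2 * sb ^ 2)) = 0 ->
  Ch ^ 2 - (Sh ^ 2 + 1) = 0 ->
  innerQ l1 l2 c s (NQ l1 l2 c s sb cb Ch Sh) (XvQ l1 l2 K c s B sb cb Ch Sh) = 0.
Proof.
  intros Hl1 Hl2 HW HCh0 Hs Hsb HB HCh.
  transitivity (((cb^2 * K^2 * l1^5 * l2^3 * Sh + sb^2 * K^2 * l1^3 * l2^5 * Sh + B * cb^2 * K * l1^4 * l2^3 * Sh + B * sb^2 * K * l1^4 * l2^3 * Sh + B^2 * cb^2 * K * l1^3 * l2^3 * Sh + B^2 * sb^2 * K * l1^3 * l2^3 * Sh + c^2 * cb^2 * K^2 * l1^5 * l2^3 * Sh + c^2 * sb^2 * K^2 * l1^3 * l2^5 * Sh + c^2 * B * cb^2 * K * l1^4 * l2^3 * Sh + c^2 * B * sb^2 * K * l1^4 * l2^3 * Sh + c^2 * B^2 * cb^2 * K * l1^3 * l2^3 * Sh + c^2 * B^2 * sb^2 * K * l1^3 * l2^3 * Sh + s^2 * cb^2 * K^2 * l1^5 * l2^3 * Sh + s^2 * sb^2 * K^2 * l1^3 * l2^5 * Sh + s^2 * B * cb^2 * K * l1^4 * l2^3 * Sh +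 s^2 * B * sb^2 * K * l1^4 * l2^3 * Sh + s^2 * B^2 * cb^2 * K * l1^3 * l2^3 * Sh + s^2 * B^2 * sb^2 * K * l1^3 * l2^3 * Sh) * (s ^ 2 - (1 - c ^ 2)) + (B * K * l1^4 * l2^3 * Sh + B^2 * K * l1^3 * l2^3 * Sh) * (sb ^ 2 - (1 - cb ^ 2)) + (K * l1^3 * l2^3 * Sh) * (B ^ 2 - (l1 ^ 2 - K * (l1 ^ 2 * cb ^ 2 + l2 ^ 2 * sb ^ 2)))) / (l1 ^ 4 * l2 ^ 3 * (l1 + B) ^ 2 * Ch ^ 1)).
  - unfold NQ, covQ, innerQ, XuQ, XvQ, XuuQ, XvvQ, Gmq, miq, dgfq, mfdq, mfq, cofq, cofdq, frq, sum3, F1q, F2q, F1dq, F2dq, F1ddq, F2ddq, A1q, A2q, A1dq, A2dq, A1ddq, A2ddq, Tq, Tdq, Tddq, Bdq, Bddq. field. repeat split; assumption.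
  - rewrite ?Hs, ?Hsb, ?HB, ?HCh. unfold Rdiv. ring.
Qed.
Lemma alg_fc0 l1 l2 K c s B sb cb Ch Sh : l1 <> 0 -> l2 <> 0 -> l1 + B <> 0 -> Ch <> 0 ->
  s ^ 2 - (1 - c ^ 2) = 0 -> sb ^ 2 - (1 - cb ^ 2) = 0 ->
  B ^ 2 - (l1 ^ 2 - K * (l1 ^ 2 * cb ^ 2 + l2 ^ 2 * sb ^ 2)) = 0 ->
  Ch ^ 2 - (Sh ^ 2 + 1) = 0 ->
  innerQ l1 l2 c s (NQ l1 l2 c s sb cb Ch Sh) (fun i => frq l1 l2 0 i c s) - cb / Ch = 0.
Proof.
  intros Hl1 Hl2 HW HCh0 Hs Hsb HB HCh.
  transitivity (((cb * l1^2 * l2^2 + c^2 * cb * l1^2 * l2^2 + s^2 * cb * l1^2 * l2^2) * (s ^ 2 - (1 - c ^ 2))) / (l1 ^ 2 * l2 ^ 2 * (l1 + B) ^ 0 * Ch ^ 1)).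
  - unfold NQ, covQ, innerQ, XuQ, XvQ, XuuQ, XvvQ, Gmq, miq, dgfq, mfdq, mfq, cofq, cofdq, frq, sum3, F1q, F2q, F1dq, F2dq, F1ddq, F2ddq, A1q, A2q, A1dq, A2dq, A1ddq, A2ddq, Tq, Tdq, Tddq, Bdq, Bddq. field. repeat split; assumption.
  - rewrite ?Hs, ?Hsb, ?HB, ?HCh. unfold Rdiv. ring.
Qed.
Lemma alg_fc1 l1 l2 K c s B sb cb Ch Sh : l1 <> 0 -> l2 <> 0 -> l1 + B <> 0 -> Ch <> 0 ->
  s ^ 2 - (1 - c ^ 2) = 0 -> sb ^ 2 - (1 - cb ^ 2) = 0 ->
  B ^ 2 - (l1 ^ 2 - K * (l1 ^ 2 * cb ^ 2 + l2 ^ 2 * sb ^ 2)) = 0 ->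
  Ch ^ 2 - (Sh ^ 2 + 1) = 0 ->
  innerQ l1 l2 c s (NQ l1 l2 c s sb cb Ch Sh) (fun i => frq l1 l2 1 i c s) - sb / Ch = 0.
Proof.
  intros Hl1 Hl2 HW HCh0 Hs Hsb HB HCh.
  transitivity (((sb * l1^2 * l2^2 + c^2 * sb * l1^2 * l2^2 + s^2 * sb * l1^2 * l2^2) * (s ^ 2 - (1 - c ^ 2))) / (l1 ^ 2 * l2 ^ 2 * (l1 + B) ^ 0 * Ch ^ 1)).
  - unfold NQ, covQ, innerQ, XuQ, XvQ, XuuQ, XvvQ, Gmq, miq, dgfq, mfdq, mfq, cofq, cofdq, frq, sum3, F1q, F2q, F1dq, F2dq, F1ddq, F2ddq, A1q, A2q, A1dq, A2dq, A1ddq, A2ddq, Tq, Tdq, Tddq, Bdq, Bddq. field. repeat split; assumption.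
  - rewrite ?Hs, ?Hsb, ?HB, ?HCh. unfold Rdiv. ring.
Qed.
Lemma alg_fc2 l1 l2 K c s B sb cb Ch Sh : l1 <> 0 -> l2 <> 0 -> l1 + B <> 0 -> Ch <> 0 ->
  s ^ 2 - (1 - c ^ 2) = 0 -> sb ^ 2 - (1 - cb ^ 2) = 0 ->
  B ^ 2 - (l1 ^ 2 - K * (l1 ^ 2 * cb ^ 2 + l2 ^ 2 * sb ^ 2)) = 0 ->
  Ch ^ 2 - (Sh ^ 2 + 1) = 0 ->
  innerQ l1 l2 c s (NQ l1 l2 c s sb cb Ch Sh) (fun i => frq l1 l2 2 i c s) - (- Sh / Ch) = 0.
Proof.
  intros Hl1 Hl2 HW HCh0 Hs Hsb HB HCh.
  transitivity ((0) / (l1 ^ 2 * l2 ^ 2 * (l1 + B) ^ 0 * Ch ^ 1)).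
  - unfold NQ, covQ, innerQ, XuQ, XvQ, XuuQ, XvvQ, Gmq, miq, dgfq, mfdq, mfq, cofq, cofdq, frq, sum3, F1q, F2q, F1dq, F2dq, F1ddq, F2ddq, A1q, A2q, A1dq, A2dq, A1ddq, A2ddq, Tq, Tdq, Tddq, Bdq, Bddq. field. repeat split; assumption.
  - rewrite ?Hs, ?Hsb, ?HB, ?HCh. unfold Rdiv. ring.
Qed.
Lemma alg_imm l1 l2 K c s B sb cb Ch Sh : l1 <> 0 -> l2 <> 0 -> l1 + B <> 0 -> Ch <> 0 ->
  s ^ 2 - (1 - c ^ 2) = 0 -> sb ^ 2 - (1 - cb ^ 2) = 0 ->
  B ^ 2 - (l1 ^ 2 - K * (l1 ^ 2 * cb ^ 2 + l2 ^ 2 * sb ^ 2)) = 0 ->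
  Ch ^ 2 - (Sh ^ 2 + 1) = 0 ->
  F1q l1 l2 K c s B sb cb ^ 2 + F2q l1 l2 K c s B sb cb ^ 2 - (1 / (l1 ^ 2 * l2)) ^ 2 * Tq l1 l2 K B ^ 2 * (sb ^ 2 / l1 ^ 2 + cb ^ 2 / l2 ^ 2) = 0.
Proof.
  intros Hl1 Hl2 HW HCh0 Hs Hsb HB HCh.
  transitivity (((cb^2 * K^2 * l1^4 * l2^2 + sb^2 * K^2 * l1^2 * l2^4) * (s ^ 2 - (1 - c ^ 2))) / (l1 ^ 6 * l2 ^ 4 * (l1 + B) ^ 2 * Ch ^ 0)).
  - unfold NQ, covQ, innerQ, XuQ, XvQ, XuuQ, XvvQ, Gmq, miq, dgfq, mfdq, mfq, cofq, cofdq, frq, sum3, F1q, F2q, F1dq, F2dq, F1ddq, F2ddq, A1q, A2q, A1dq, A2dq, A1ddq, A2ddq, Tq, Tdq, Tddq, Bdq, Bddq. field. repeat split; assumption.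
  - rewrite ?Hs, ?Hsb, ?HB, ?HCh. unfold Rdiv. ring.
Qed.

Fixpoint CkR (n : nat) (f : R -> R) : Prop :=
  (forall x, continuous f x) /\
  match n with 0%nat => True | S m => (forall x, ex_derive f x) /\ CkR m (Derive f) end.

Lemma CkR_S : forall n f, CkR (S n) f -> CkR n f.
Proof.
  induction n; intros f H; destruct H as [Hc [Hd H]].
  - split; auto.
  - split; auto.
Qed.

Lemma CkR_le : forall n m f, (m <= n)%nat -> CkR n f -> CkR m f.
Proof.
  intros n m f Hle; induction Hle; auto. intros H; apply IHHle, CkR_S, H.
Qed.

Lemma CkR_cont : forall n f x, CkR n f -> continuous f x.
Proof. intros n f x H; destruct n; apply H. Qed.

Lemma CkR_ext : forall n f g, (forall x, f x = g x) -> CkR n f -> CkR n g.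
Proof.
  intros n f g H Hf. replace g with f; auto. apply functional_extensionality; auto.
Qed.

Lemma CkR_intro : forall m f f',
  (forall x, is_derive f x (f' x)) -> CkR m f' -> CkR (S m) f.
Proof.
  intros m f f' Hd Hf'. split.
  - intros x. apply (@ex_derive_continuous R_AbsRing R_NormedModule). eexists; apply Hd.
  - split. + intros x; eexists; apply Hd.
    + apply CkR_ext with f'; auto. intros x; symmetry; apply is_derive_unique, Hd.
Qed.

Lemma CkR_const : forall n c, CkR n (fun _ => c).
Proof.
  induction n; intros c.
  - split; auto. intros x; apply continuous_const.
  - apply CkR_intro with (fun _ => 0); auto. intros x. auto_derive; auto.
Qed.

Lemma CkR_deriv : forall n f, CkR (S n) f -> forall x, is_derive f x (Derive f x).
Proof. intros n f H x. apply Derive_correct. apply H. Qed.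

Lemma CkR_Dfun : forall n f, CkR (S n) f -> CkR n (Derive f).
Proof. intros n f H; apply H. Qed.

Lemma CkR_plus : forall n f g, CkR n f -> CkR n g -> CkR n (fun x => f x + g x).
Proof.
  induction n; intros f g Hf Hg.
  - split; auto. intros x. apply (continuous_plus f g); [apply Hf|apply Hg].
  - apply CkR_intro with (fun x => Derive f x + Derive g x).
    + intros x. apply (is_derive_plus f g); apply Derive_correct; [apply Hf|apply Hg].
    + apply IHn; apply CkR_Dfun; auto.
Qed.

Lemma CkR_mult : forall n f g, CkR n f -> CkR n g -> CkR n (fun x => f x * g x).
Proof.
  induction n; intros f g Hf Hg.
  - split; auto. intros x. apply (continuous_mult f g); [apply Hf|apply Hg].
  - apply CkR_intro with (fun x => Derive f x * g x + f x * Derive g x).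
    + intros x. apply (is_derive_mult f g); [apply Derive_correct, Hf | apply Derive_correct, Hg | intros; apply Rmult_comm].
    + apply CkR_plus; apply IHn; try apply CkR_Dfun; auto; apply CkR_S; auto.
Qed.

Lemma CkR_opp : forall n f, CkR n f -> CkR n (fun x => - f x).
Proof.
  intros n f H. apply CkR_ext with (fun x => (-1) * f x). intros; ring.
  apply CkR_mult; auto. apply CkR_const.
Qed.

Lemma cont_inv : forall (f : R -> R) (x : R), continuous f x -> f x <> 0 -> continuous (fun y => / f y) x.
Proof.
  intros f x Hc Hnz. apply (continuous_comp f Rinv). exact Hc.
  apply continuity_pt_filterlim. apply continuity_pt_inv; auto. apply continuity_pt_id.
Qed.

Lemma CkR_inv : forall n f, (forall x, f x <> 0) -> CkR n f -> CkR n (fun x => / f x).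
Proof.
  induction n; intros f Hnz Hf.
  - split; auto. intros x. apply cont_inv; auto. apply Hf.
  - apply CkR_intro with (fun x => - Derive f x / f x ^ 2).
    + intros x. apply is_derive_inv; auto. apply Derive_correct, Hf.
    + apply CkR_ext with (fun x => - Derive f x * (/ f x * / f x)).
      * intros x. field. auto.
      * apply CkR_mult. apply CkR_opp, CkR_Dfun; auto.
        apply CkR_mult; apply IHn; auto; apply CkR_S; auto.
Qed.

Lemma cont_sqrt : forall (f : R -> R) (x : R), 0 < f x -> continuous f x -> continuous (fun y => sqrt (f y)) x.
Proof.
  intros f x Hp Hc. apply (continuous_comp f sqrt). exact Hc.
  apply continuity_pt_filterlim. apply continuity_pt_sqrt. lra.
Qed.

Lemma CkR_sqrt : forall n f, (forall x, 0 < f x) -> CkR n f -> CkR n (fun x => sqrt (f x)).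
Proof.
  induction n; intros f Hp Hf.
  - split; auto. intros x. apply cont_sqrt; auto. apply Hf.
  - apply CkR_intro with (fun x => Derive f x / (2 * sqrt (f x))).
    + intros x. apply is_derive_sqrt; auto. apply Derive_correct, Hf.
    + apply CkR_mult. apply CkR_Dfun; auto.
      apply CkR_inv. intros x. apply Rgt_not_eq. apply Rmult_lt_0_compat. lra. apply sqrt_lt_R0; auto.
      apply CkR_mult. apply CkR_const. apply IHn; auto. apply CkR_S; auto.
Qed.

Lemma CkR_comp : forall n g h, (forall m, CkR m g) -> CkR n h -> CkR n (fun x => g (h x)).
Proof.
  induction n; intros g h Hg Hh.
  - split; auto. intros x. apply (continuous_comp h g). apply Hh. apply (CkR_cont 0), Hg.
  - apply CkR_intro with (fun x => Derive h x * Derive g (h x)).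
    + intros x. apply (is_derive_comp g h). apply Derive_correct, (Hg 1%nat).
      apply Derive_correct, Hh.
    + apply CkR_mult. apply CkR_Dfun; auto.
      apply IHn. intros m. apply CkR_Dfun, Hg. apply CkR_S; auto.
Qed.

Lemma CkR_id : forall n, CkR n (fun x => x).
Proof.
  destruct n. split; auto. intros; apply continuous_id.
  apply CkR_intro with (fun _ => 1). intros x. auto_derive; auto. apply CkR_const.
Qed.

Lemma CkR_sincos : forall n, CkR n sin /\ CkR n cos.
Proof.
  induction n.
  - split; split; auto; intros x; apply continuity_pt_filterlim; [apply continuity_sin|apply continuity_cos].
  - destruct IHn as [Hs Hc]. split.
    + apply CkR_intro with cos; auto. intros x. auto_derive; auto; ring.
    + apply CkR_intro with (fun x => - sin x); auto. intros x. auto_derive; auto; ring.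
      apply CkR_opp; auto.
Qed.

Lemma CkR_exp : forall n, CkR n exp.
Proof.
  induction n.
  - split; auto. intros x; apply continuity_pt_filterlim, derivable_continuous_pt, derivable_pt_exp.
  - apply CkR_intro with exp; auto. intros x. auto_derive; auto; ring.
Qed.

Lemma pu_prod : forall (G A : R -> R) u v, ex_derive A u ->
  pu (fun u v => G v * A u) u v = G v * Derive A u.
Proof. intros. unfold pu. apply Derive_scal. Qed.

Lemma pv_prod : forall (G A : R -> R) u v, ex_derive G v ->
  pv (fun u v => G v * A u) u v = Derive G v * A u.
Proof.
  intros. unfold pv. rewrite (Derive_ext _ (fun t => A u * G t)). rewrite Derive_scal. ring.
  intros; ring.
Qed.

Lemma Ck_prod : forall n (G A : R -> R), CkR n G -> CkR n A -> Ck n (fun u v => G v * A u).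
Proof.
  induction n; intros G A HG HA.
  - split; auto. intros u v. simpl.
    apply (continuous_mult (fun q : R * R => G (snd q)) (fun q : R * R => A (fst q))).
    + apply (continuous_comp snd G). apply continuous_snd. apply (CkR_cont 0), HG.
    + apply (continuous_comp fst A). apply continuous_fst. apply (CkR_cont 0), HA.
  - split.
    + intros u v. simpl.
      apply (continuous_mult (fun q : R * R => G (snd q)) (fun q : R * R => A (fst q))).
      * apply (continuous_comp snd G). apply continuous_snd. apply (CkR_cont (S n)), HG.
      * apply (continuous_comp fst A). apply continuous_fst. apply (CkR_cont (S n)), HA.
    + split; [|split; [|split]].
      * intros u v. apply ex_derive_scal. apply HA.
      * intros u v. apply (ex_derive_mult G (fun _ => A u)). apply HG. apply ex_derive_const.
      * replace (pu (fun u v => G v * A u)) with (fun u v => G v * Derive A u).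
        apply IHn. apply CkR_S; auto. apply CkR_Dfun; auto.
        apply functional_extensionality; intros u; apply functional_extensionality; intros v.
        symmetry; apply pu_prod. apply HA.
      * replace (pv (fun u v => G v * A u)) with (fun u v => Derive G v * A u).
        apply IHn. apply CkR_Dfun; auto. apply CkR_S; auto.
        apply functional_extensionality; intros u; apply functional_extensionality; intros v.
        symmetry; apply pv_prod. apply HG.
Qed.

Definition Pq l1 l2 K y := l1 ^ 2 - K * (l1 ^ 2 * cos y ^ 2 + l2 ^ 2 * sin y ^ 2).

Lemma Pq_pos l1 l2 K : 0 < l1 -> 0 < l2 -> l2 <= l1 -> -1 < K < 1 -> forall y, 0 < Pq l1 l2 K y.
Proof.
  intros H1 H2 H12 HK y. unfold Pq.
  assert (Hcs := sin2_cos2 y). set (c := cos y) in *. set (s := sin y) in *.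
  assert (Hcs' : s ^ 2 + c ^ 2 = 1) by (rewrite <- Hcs; unfold Rsqr; ring). clear Hcs. rename Hcs' into Hcs.
  assert (HQ0 : 0 <= l1 ^ 2 * c ^ 2 + l2 ^ 2 * s ^ 2) by nra.
  assert (HQ1 : l1 ^ 2 * c ^ 2 + l2 ^ 2 * s ^ 2 <= l1 ^ 2).
  { assert (l2 ^ 2 <= l1 ^ 2) by nra. assert (0 <= s ^ 2) by nra.
    assert (0 <= (l1 ^ 2 - l2 ^ 2) * s ^ 2) by (apply Rmult_le_pos; lra).
    replace (l1 ^ 2) with (l1 ^ 2 * (s ^ 2 + c ^ 2)) at 3 by (rewrite Hcs; ring). nra. }
  set (Q := l1 ^ 2 * c ^ 2 + l2 ^ 2 * s ^ 2) in *.
  assert (0 < l1 ^ 2) by nra.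
  destruct (Rle_lt_dec 0 K).
  - assert (0 <= K * (l1 ^ 2 - Q)) by (apply Rmult_le_pos; lra).
    assert (0 < (1 - K) * l1 ^ 2) by (apply Rmult_lt_0_compat; lra). nra.
  - assert (0 <= - K * Q) by (apply Rmult_le_pos; lra). nra.
Qed.

Definition Bv l1 l2 K (b : R -> R) v := bprime l1 l2 K (b v).

Lemma Bv_pos l1 l2 K b v : 0 < l1 -> 0 < l2 -> l2 <= l1 -> -1 < K < 1 -> 0 < Bv l1 l2 K b v.
Proof. intros. unfold Bv, bprime. apply sqrt_lt_R0. apply (Pq_pos l1 l2 K); auto. Qed.

Lemma Bv_sq l1 l2 K b v : 0 < l1 -> 0 < l2 -> l2 <= l1 -> -1 < K < 1 ->
  Bv l1 l2 K b v ^ 2 = l1 ^ 2 - K * (l1 ^ 2 * cos (b v) ^ 2 + l2 ^ 2 * sin (b v) ^ 2).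
Proof.
  intros. unfold Bv, bprime. rewrite pow2_sqrt; auto.
  apply Rlt_le. apply (Pq_pos l1 l2 K); auto.
Qed.

Lemma Bv_deriv l1 l2 K b v : 0 < l1 -> 0 < l2 -> l2 <= l1 -> -1 < K < 1 ->
  (forall v, is_derive b v (bprime l1 l2 K (b v))) ->
  is_derive (Bv l1 l2 K b) v (Bdq l1 l2 K (sin (b v)) (cos (b v))).
Proof.
  intros H1 H2 H12 HK Hb.
  assert (HP := Pq_pos l1 l2 K H1 H2 H12 HK (b v)).
  assert (HdP : is_derive (fun x => Pq l1 l2 K (b x)) v
     (- K * (l1 ^ 2 * (2 * cos (b v) * (- sin (b v) * bprime l1 l2 K (b v)))
             + l2 ^ 2 * (2 * sin (b v) * (cos (b v) * bprime l1 l2 K (b v)))))).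
  { unfold Pq. auto_derive.
    - repeat split; auto; eexists; apply Hb.
    - replace (Derive (fun x => b x) v) with (bprime l1 l2 K (b v))
        by (symmetry; apply is_derive_unique; apply Hb). ring. }
  assert (H := is_derive_sqrt _ _ _ HdP HP).
  unfold Bv. eapply is_derive_ext; [intros t; reflexivity|].
  replace (Bdq l1 l2 K (sin (b v)) (cos (b v))) with
    (- K * (l1 ^ 2 * (2 * cos (b v) * (- sin (b v) * bprime l1 l2 K (b v)))
             + l2 ^ 2 * (2 * sin (b v) * (cos (b v) * bprime l1 l2 K (b v)))) / (2 * sqrt (Pq l1 l2 K (b v)))).
  exact H.
  assert (sqrt (Pq l1 l2 K (b v)) <> 0) by (apply Rgt_not_eq, sqrt_lt_R0; auto).
  unfold Bdq. change (bprime l1 l2 K (b v)) with (sqrt (Pq l1 l2 K (b v))). field. auto.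
Qed.

Definition Hyps l1 l2 K (b x3 : R -> R) : Prop :=
  0 < l1 /\ 0 < l2 /\ l2 <= l1 /\ -1 < K < 1 /\ K <> 0 /\
  (forall v, is_derive b v (bprime l1 l2 K (b v))) /\
  (forall v, is_derive x3 v (x3prime l1 l2 K b v)).

Definition Tv l1 l2 K b v := Tq l1 l2 K (Bv l1 l2 K b v).
Definition Tdv l1 l2 K b v := Tdq l1 l2 K (Bv l1 l2 K b v) (sin (b v)) (cos (b v)).
Definition F1 l1 l2 K b (x3 : R -> R) v :=
  F1q l1 l2 K (cos (x3 v)) (sin (x3 v)) (Bv l1 l2 K b v) (sin (b v)) (cos (b v)).
Definition F2 l1 l2 K b (x3 : R -> R) v :=
  F2q l1 l2 K (cos (x3 v)) (sin (x3 v)) (Bv l1 l2 K b v) (sin (b v)) (cos (b v)).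
Definition F1d l1 l2 K b (x3 : R -> R) v :=
  F1dq l1 l2 K (cos (x3 v)) (sin (x3 v)) (Bv l1 l2 K b v) (sin (b v)) (cos (b v)).
Definition F2d l1 l2 K b (x3 : R -> R) v :=
  F2dq l1 l2 K (cos (x3 v)) (sin (x3 v)) (Bv l1 l2 K b v) (sin (b v)) (cos (b v)).
Definition F1dd l1 l2 K b (x3 : R -> R) v :=
  F1ddq l1 l2 K (cos (x3 v)) (sin (x3 v)) (Bv l1 l2 K b v) (sin (b v)) (cos (b v)).
Definition F2dd l1 l2 K b (x3 : R -> R) v :=
  F2ddq l1 l2 K (cos (x3 v)) (sin (x3 v)) (Bv l1 l2 K b v) (sin (b v)) (cos (b v)).

Ltac drw l1 l2 K b x3 v Hb Hx3 HB :=
  try replace (Derive (fun x => x3 x) v) with (x3prime l1 l2 K b v)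
        by (symmetry; apply is_derive_unique; apply Hx3);
  try replace (Derive (fun x => b x) v) with (Bv l1 l2 K b v)
        by (symmetry; apply is_derive_unique; apply Hb);
  try replace (Derive (fun x => Bv l1 l2 K b x) v) with (Bdq l1 l2 K (sin (b v)) (cos (b v)))
        by (symmetry; apply is_derive_unique; apply HB).

Lemma D_T l1 l2 K b x3 v : Hyps l1 l2 K b x3 -> is_derive (Tv l1 l2 K b) v (Tdv l1 l2 K b v).
Proof.
  intros (H1 & H2 & H12 & HK & HK0 & Hb & Hx3).
  assert (HB : forall v, is_derive (Bv l1 l2 K b) v (Bdq l1 l2 K (sin (b v)) (cos (b v))))
    by (intros; apply Bv_deriv; auto).
  assert (HBp := Bv_pos l1 l2 K b v H1 H2 H12 HK).
  unfold Tv, Tq. auto_derive.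
  - repeat split; try (eexists; apply HB). lra.
  - drw l1 l2 K b x3 v Hb Hx3 HB. unfold Tdv, Tdq. field. lra.
Qed.

Ltac dprep H :=
  destruct H as (H1 & H2 & H12 & HK & HK0 & Hb & Hx3);
  assert (HB : forall v, is_derive (Bv _ _ _ _) v (Bdq _ _ _ (sin (_ v)) (cos (_ v))))
    by (intros; apply Bv_deriv; auto).

Lemma D_F1 l1 l2 K b x3 v : Hyps l1 l2 K b x3 -> is_derive (F1 l1 l2 K b x3) v (F1d l1 l2 K b x3 v).
Proof.
  intros H. destruct H as (H1 & H2 & H12 & HK & HK0 & Hb & Hx3).
  assert (HB : forall v, is_derive (Bv l1 l2 K b) v (Bdq l1 l2 K (sin (b v)) (cos (b v))))
    by (intros; apply Bv_deriv; auto).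
  assert (HBp := Bv_pos l1 l2 K b v H1 H2 H12 HK).
  unfold F1, F1q, A1q, Tq. auto_derive.
  - assert (ex_derive x3 v) by (eexists; apply Hx3).
    assert (ex_derive b v) by (eexists; apply Hb).
    assert (ex_derive (Bv l1 l2 K b) v) by (eexists; apply HB).
    repeat split; auto. lra.
  - drw l1 l2 K b x3 v Hb Hx3 HB.
    change (x3prime l1 l2 K b v) with (Tq l1 l2 K (Bv l1 l2 K b v)).
    unfold F1d, F1dq, A1dq, A1q, Tq, Tdq, Bdq.
    set (B := Bv l1 l2 K b v) in *. set (c := cos (x3 v)). set (s := sin (x3 v)).
    set (cb := cos (b v)). set (sb := sin (b v)).
    field. lra.
Qed.

Lemma D_F2 l1 l2 K b x3 v : Hyps l1 l2 K b x3 -> is_derive (F2 l1 l2 K b x3) v (F2d l1 l2 K b x3 v).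
Proof.
  intros H. destruct H as (H1 & H2 & H12 & HK & HK0 & Hb & Hx3).
  assert (HB : forall v, is_derive (Bv l1 l2 K b) v (Bdq l1 l2 K (sin (b v)) (cos (b v))))
    by (intros; apply Bv_deriv; auto).
  assert (HBp := Bv_pos l1 l2 K b v H1 H2 H12 HK).
  unfold F2, F2q, A2q, Tq. auto_derive.
  - assert (ex_derive x3 v) by (eexists; apply Hx3).
    assert (ex_derive b v) by (eexists; apply Hb).
    assert (ex_derive (Bv l1 l2 K b) v) by (eexists; apply HB).
    assert (l1 + Bv l1 l2 K b v <> 0) by lra.
    repeat split; auto; repeat apply Rmult_integral_contrapositive_currified; auto; lra.
  - drw l1 l2 K b x3 v Hb Hx3 HB.
    change (x3prime l1 l2 K b v) with (Tq l1 l2 K (Bv l1 l2 K b v)).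
    unfold F2d, F2dq, A2dq, A2q, Tq, Tdq, Bdq.
    set (B := Bv l1 l2 K b v) in *. set (c := cos (x3 v)). set (s := sin (x3 v)).
    set (cb := cos (b v)). set (sb := sin (b v)).
    field. lra.
Qed.

Lemma D_F1d l1 l2 K b x3 v : Hyps l1 l2 K b x3 -> is_derive (F1d l1 l2 K b x3) v (F1dd l1 l2 K b x3 v).
Proof.
  intros H. destruct H as (H1 & H2 & H12 & HK & HK0 & Hb & Hx3).
  assert (HB : forall v, is_derive (Bv l1 l2 K b) v (Bdq l1 l2 K (sin (b v)) (cos (b v))))
    by (intros; apply Bv_deriv; auto).
  assert (HBp := Bv_pos l1 l2 K b v H1 H2 H12 HK).
  unfold F1d, F1dq, A1dq, A1q, Tq, Tdq, Bdq. auto_derive.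
  - assert (ex_derive x3 v) by (eexists; apply Hx3).
    assert (ex_derive b v) by (eexists; apply Hb).
    assert (ex_derive (Bv l1 l2 K b) v) by (eexists; apply HB).
    assert (l1 + Bv l1 l2 K b v <> 0) by lra.
    repeat split; auto; repeat apply Rmult_integral_contrapositive_currified; auto; lra.
  - drw l1 l2 K b x3 v Hb Hx3 HB.
    change (x3prime l1 l2 K b v) with (Tq l1 l2 K (Bv l1 l2 K b v)).
    unfold F1dd, F1ddq, A1ddq, A1dq, A1q, Tq, Tdq, Tddq, Bdq, Bddq.
    set (B := Bv l1 l2 K b v) in *. set (c := cos (x3 v)). set (s := sin (x3 v)).
    set (cb := cos (b v)). set (sb := sin (b v)).
    field. lra.
Qed.

Lemma D_F2d l1 l2 K b x3 v : Hyps l1 l2 K b x3 -> is_derive (F2d l1 l2 K b x3) v (F2dd l1 l2 K b x3 v).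
Proof.
  intros H. destruct H as (H1 & H2 & H12 & HK & HK0 & Hb & Hx3).
  assert (HB : forall v, is_derive (Bv l1 l2 K b) v (Bdq l1 l2 K (sin (b v)) (cos (b v))))
    by (intros; apply Bv_deriv; auto).
  assert (HBp := Bv_pos l1 l2 K b v H1 H2 H12 HK).
  unfold F2d, F2dq, A2dq, A2q, Tq, Tdq, Bdq. auto_derive.
  - assert (ex_derive x3 v) by (eexists; apply Hx3).
    assert (ex_derive b v) by (eexists; apply Hb).
    assert (ex_derive (Bv l1 l2 K b) v) by (eexists; apply HB).
    assert (l1 + Bv l1 l2 K b v <> 0) by lra.
    repeat split; auto; repeat apply Rmult_integral_contrapositive_currified; auto; lra.
  - drw l1 l2 K b x3 v Hb Hx3 HB.
    change (x3prime l1 l2 K b v) with (Tq l1 l2 K (Bv l1 l2 K b v)).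
    unfold F2dd, F2ddq, A2ddq, A2dq, A2q, Tq, Tdq, Tddq, Bdq, Bddq.
    set (B := Bv l1 l2 K b v) in *. set (c := cos (x3 v)). set (s := sin (x3 v)).
    set (cb := cos (b v)). set (sb := sin (b v)).
    field. lra.
Qed.

Lemma cosh_sinh_id x : cosh x ^ 2 - (sinh x ^ 2 + 1) = 0.
Proof.
  unfold cosh, sinh. rewrite exp_Ropp. assert (exp x <> 0) by (apply Rgt_not_eq, exp_pos).
  field. auto.
Qed.

Lemma D_Sh l1 u : is_derive (fun u => sinh (- l1 * u)) u (- l1 * cosh (- l1 * u)).
Proof.
  unfold sinh, cosh. auto_derive; auto. match goal with |- ?a = ?b => change (@eq R a b) end. field.
Qed.

Lemma D_Shd l1 u : is_derive (fun u => - l1 * cosh (- l1 * u)) u (l1 ^ 2 * sinh (- l1 * u)).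
Proof.
  unfold sinh, cosh. auto_derive; auto. match goal with |- ?a = ?b => change (@eq R a b) end. field.
Qed.


Lemma cof_deriv l1 l2 a i t :
  is_derive (fun t => cofq l1 l2 a i (cos t) (sin t)) t (cofdq l1 l2 a i (cos t) (sin t)).
Proof.
  destruct a as [|[|[|a]]]; destruct i as [|[|[|i]]]; simpl; auto_derive; auto; ring.
Qed.

Lemma mf_deriv l1 l2 i j t :
  is_derive (fun t => mfq l1 l2 i j (cos t) (sin t)) t (mfdq l1 l2 i j (cos t) (sin t)).
Proof.
  unfold mfq, mfdq, sum3.
  destruct i as [|[|[|i]]]; destruct j as [|[|[|j]]]; simpl; auto_derive; auto; ring.
Qed.

Lemma pderiv_eq l1 l2 i j m p :
  pderiv (metric l1 l2 i j) m p = dgfq l1 l2 m i j (cos (coord p 2)) (sin (coord p 2)).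
Proof.
  destruct p as [[x y] z]. destruct m as [|[|m]]; unfold pderiv.
  - rewrite (Derive_ext _ (fun _ => metric l1 l2 i j (x, y, z))); [apply Derive_const|].
    intros; reflexivity.
  - rewrite (Derive_ext _ (fun _ => metric l1 l2 i j (x, y, z))); [apply Derive_const|].
    intros; reflexivity.
  - rewrite (Derive_ext _ (fun t => mfq l1 l2 i j (cos t) (sin t))); [|intros; reflexivity].
    simpl. apply is_derive_unique, mf_deriv.
Qed.

Lemma christoffel_eq l1 l2 k i j p :
  christoffel l1 l2 k i j p = Gmq l1 l2 k i j (cos (coord p 2)) (sin (coord p 2)).
Proof.
  unfold christoffel, Gmq, sum3. rewrite !pderiv_eq. reflexivity.
Qed.

Lemma christoffel_fun l1 l2 :
  christoffel l1 l2 = fun k i j p => Gmq l1 l2 k i j (cos (coord p 2)) (sin (coord p 2)).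
Proof.
  repeat (apply functional_extensionality; intro). apply christoffel_eq.
Qed.

Definition XuF l1 l2 K b (x3 : R -> R) u v := XuQ l1 l2 K (cos (x3 v)) (sin (x3 v)) (Bv l1 l2 K b v) (sin (b v)) (cos (b v)) (cosh (- l1 * u)) (sinh (- l1 * u)).
Definition XvF l1 l2 K b (x3 : R -> R) u v := XvQ l1 l2 K (cos (x3 v)) (sin (x3 v)) (Bv l1 l2 K b v) (sin (b v)) (cos (b v)) (cosh (- l1 * u)) (sinh (- l1 * u)).
Definition XuuF l1 l2 K b (x3 : R -> R) u v := XuuQ l1 l2 K (cos (x3 v)) (sin (x3 v)) (Bv l1 l2 K b v) (sin (b v)) (cos (b v)) (cosh (- l1 * u)) (sinh (- l1 * u)).
Definition XvvF l1 l2 K b (x3 : R -> R) u v := XvvQ l1 l2 K (cos (x3 v)) (sin (x3 v)) (Bv l1 l2 K b v) (sin (b v)) (cos (b v)) (cosh (- l1 * u)) (sinh (- l1 * u)).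

Lemma Xc0 l1 l2 K b x3 : Xc (Xmap l1 l2 K b x3) 0 = fun u v => F1 l1 l2 K b x3 v * sinh (- l1 * u).
Proof. reflexivity. Qed.
Lemma Xc1 l1 l2 K b x3 : Xc (Xmap l1 l2 K b x3) 1 = fun u v => F2 l1 l2 K b x3 v * sinh (- l1 * u).
Proof. reflexivity. Qed.
Lemma Xc2 l1 l2 K b x3 k : Xc (Xmap l1 l2 K b x3) (S (S k)) = fun u v => x3 v.
Proof. reflexivity. Qed.

Lemma exd_Sh l1 u : ex_derive (fun u => sinh (- l1 * u)) u.
Proof. eexists; apply D_Sh. Qed.
Lemma exd_Shd l1 u : ex_derive (fun u => - l1 * cosh (- l1 * u)) u.
Proof. eexists; apply D_Shd. Qed.

Lemma Der_Sh l1 u : Derive (fun u : R => sinh (- l1 * u)) u = - l1 * cosh (- l1 * u).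
Proof. apply is_derive_unique, D_Sh. Qed.
Lemma Der_Shd l1 u : Derive (fun u : R => - l1 * cosh (- l1 * u)) u = l1 ^ 2 * sinh (- l1 * u).
Proof. apply is_derive_unique, D_Shd. Qed.

Lemma pu_X l1 l2 K b x3 k u v : Hyps l1 l2 K b x3 ->
  pu (Xc (Xmap l1 l2 K b x3) k) u v = XuF l1 l2 K b x3 u v k.
Proof.
  intros H. destruct k as [|[|k]].
  - rewrite Xc0, pu_prod by apply exd_Sh. rewrite Der_Sh. reflexivity.
  - rewrite Xc1, pu_prod by apply exd_Sh. rewrite Der_Sh. reflexivity.
  - rewrite Xc2. unfold pu. apply Derive_const.
Qed.

Lemma pv_X l1 l2 K b x3 k u v : Hyps l1 l2 K b x3 ->
  pv (Xc (Xmap l1 l2 K b x3) k) u v = XvF l1 l2 K b x3 u v k.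
Proof.
  intros H. destruct k as [|[|k]].
  - rewrite Xc0, pv_prod by (eexists; apply D_F1; auto). rewrite (is_derive_unique _ _ _ (D_F1 _ _ _ _ _ v H)). reflexivity.
  - rewrite Xc1, pv_prod by (eexists; apply D_F2; auto). rewrite (is_derive_unique _ _ _ (D_F2 _ _ _ _ _ v H)). reflexivity.
  - rewrite Xc2. unfold pv. destruct H as (_ & _ & _ & _ & _ & _ & Hx3).
    apply is_derive_unique, Hx3.
Qed.

Lemma pu_X_fun l1 l2 K b x3 k : Hyps l1 l2 K b x3 ->
  pu (Xc (Xmap l1 l2 K b x3) k) = fun u v => XuF l1 l2 K b x3 u v k.
Proof.
  intros H. apply functional_extensionality; intro u; apply functional_extensionality; intro v.
  apply pu_X; auto.
Qed.
Lemma pv_X_fun l1 l2 K b x3 k : Hyps l1 l2 K b x3 ->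
  pv (Xc (Xmap l1 l2 K b x3) k) = fun u v => XvF l1 l2 K b x3 u v k.
Proof.
  intros H. apply functional_extensionality; intro u; apply functional_extensionality; intro v.
  apply pv_X; auto.
Qed.

Lemma puu_X l1 l2 K b x3 k u v : Hyps l1 l2 K b x3 ->
  pu (pu (Xc (Xmap l1 l2 K b x3) k)) u v = XuuF l1 l2 K b x3 u v k.
Proof.
  intros H. rewrite pu_X_fun by auto. destruct k as [|[|k]].
  - change (fun u v => XuF l1 l2 K b x3 u v 0) with
      (fun u v => F1 l1 l2 K b x3 v * (fun u => - l1 * cosh (- l1 * u)) u).
    rewrite pu_prod by apply exd_Shd. rewrite Der_Shd. reflexivity.
  - change (fun u v => XuF l1 l2 K b x3 u v 1) with
      (fun u v => F2 l1 l2 K b x3 v * (fun u => - l1 * cosh (- l1 * u)) u).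
    rewrite pu_prod by apply exd_Shd. rewrite Der_Shd. reflexivity.
  - unfold pu, XuF, XuQ, XuuF, XuuQ. apply Derive_const.
Qed.

Lemma pvv_X l1 l2 K b x3 k u v : Hyps l1 l2 K b x3 ->
  pv (pv (Xc (Xmap l1 l2 K b x3) k)) u v = XvvF l1 l2 K b x3 u v k.
Proof.
  intros H. rewrite pv_X_fun by auto. destruct k as [|[|k]].
  - change (fun u v => XvF l1 l2 K b x3 u v 0) with
      (fun u v => F1d l1 l2 K b x3 v * sinh (- l1 * u)).
    rewrite pv_prod by (eexists; apply D_F1d; auto).
    rewrite (is_derive_unique _ _ _ (D_F1d _ _ _ _ _ v H)). reflexivity.
  - change (fun u v => XvF l1 l2 K b x3 u v 1) with
      (fun u v => F2d l1 l2 K b x3 v * sinh (- l1 * u)).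
    rewrite pv_prod by (eexists; apply D_F2d; auto).
    rewrite (is_derive_unique _ _ _ (D_F2d _ _ _ _ _ v H)). reflexivity.
  - change (fun u v => XvF l1 l2 K b x3 u v (S (S k))) with (fun (u : R) v => Tv l1 l2 K b v).
    unfold pv. apply is_derive_unique. apply (D_T l1 l2 K b x3); auto.
Qed.

Lemma Xu_fun l1 l2 K b x3 u v : Hyps l1 l2 K b x3 ->
  Xu (Xmap l1 l2 K b x3) u v = XuF l1 l2 K b x3 u v.
Proof. intros H. apply functional_extensionality; intro k. apply pu_X; auto. Qed.
Lemma Xv_fun l1 l2 K b x3 u v : Hyps l1 l2 K b x3 ->
  Xv (Xmap l1 l2 K b x3) u v = XvF l1 l2 K b x3 u v.
Proof. intros H. apply functional_extensionality; intro k. apply pv_X; auto. Qed.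

Lemma CkR_pow : forall k n f, CkR n f -> CkR n (fun x => f x ^ k).
Proof.
  induction k; intros n f H; simpl.
  - apply CkR_const.
  - apply CkR_mult; auto.
Qed.

Ltac ckr :=
  match goal with
  | |- CkR _ (fun _ => ?c) => apply CkR_const
  | |- CkR _ (fun x => x) => apply CkR_id
  | |- CkR _ (fun x => @?f x + @?g x) => apply (CkR_plus _ f g)
  | |- CkR _ (fun x => @?f x - @?g x) => apply (CkR_plus _ f (fun x => - g x))
  | |- CkR _ (fun x => @?f x * @?g x) => apply (CkR_mult _ f g)
  | |- CkR _ (fun x => @?f x / @?g x) => apply (CkR_mult _ f (fun x => / g x))
  | |- CkR _ (fun x => - @?f x) => apply (CkR_opp _ f)
  | |- CkR _ (fun x => / @?f x) => apply (CkR_inv _ f)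
  | |- CkR _ (fun x => @?f x ^ ?k) => apply (CkR_pow k _ f)
  | |- CkR _ (fun x => sqrt (@?f x)) => apply (CkR_sqrt _ f)
  | |- CkR _ (fun x => cos (@?f x)) => apply (CkR_comp _ cos f); [intros ?m; apply (CkR_sincos m)|]
  | |- CkR _ (fun x => sin (@?f x)) => apply (CkR_comp _ sin f); [intros ?m; apply (CkR_sincos m)|]
  | |- CkR _ (fun x => exp (@?f x)) => apply (CkR_comp _ exp f); [intros ?m; apply (CkR_exp m)|]
  end.

Lemma CkR_b l1 l2 K b x3 : Hyps l1 l2 K b x3 -> forall n, CkR n b /\ CkR n (Bv l1 l2 K b).
Proof.
  intros H. assert (H' := H). destruct H' as (H1 & H2 & H12 & HK & HK0 & Hb & Hx3).
  assert (Bn : forall n, CkR n b -> CkR n (Bv l1 l2 K b)).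
  { intros n Hn. change (CkR n (fun v => sqrt (Pq l1 l2 K (b v)))). unfold Pq.
    repeat (ckr || assumption).
    intros x. apply (Pq_pos l1 l2 K); auto. }
  induction n.
  - assert (CkR 0 b). { split; auto. intros x. apply (@ex_derive_continuous R_AbsRing R_NormedModule). eexists; apply Hb. }
    split; auto.
  - destruct IHn as [IH1 IH2]. assert (CkR (S n) b).
    { apply CkR_intro with (Bv l1 l2 K b); auto. }
    split; auto.
Qed.

Lemma CkR_x3 l1 l2 K b x3 : Hyps l1 l2 K b x3 -> forall n, CkR n x3.
Proof.
  intros H. assert (H' := H). destruct H' as (H1 & H2 & H12 & HK & HK0 & Hb & Hx3).
  destruct n.
  - split; auto. intros x. apply (@ex_derive_continuous R_AbsRing R_NormedModule). eexists; apply Hx3.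
  - apply CkR_intro with (fun v => Tq l1 l2 K (Bv l1 l2 K b v)); auto.
    unfold Tq. assert (HB := proj2 (CkR_b _ _ _ _ _ H n)).
    repeat (ckr || assumption).
    intros x. assert (0 < Bv l1 l2 K b x) by (apply Bv_pos; auto). lra.
Qed.

Lemma smooth_X l1 l2 K b x3 : Hyps l1 l2 K b x3 -> smooth_map (Xmap l1 l2 K b x3).
Proof.
  intros H n k. assert (H' := H). destruct H' as (H1 & H2 & H12 & HK & HK0 & Hb & Hx3).
  assert (Hbn := proj1 (CkR_b _ _ _ _ _ H n)).
  assert (HBn := proj2 (CkR_b _ _ _ _ _ H n)).
  assert (Hxn := CkR_x3 _ _ _ _ _ H n).
  assert (HW : forall x, l1 + Bv l1 l2 K b x <> 0).
  { intros x. assert (0 < Bv l1 l2 K b x) by (apply Bv_pos; auto). lra. }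
  assert (HS : CkR n (fun u => sinh (- l1 * u))).
  { unfold sinh. repeat ckr. }
  destruct k as [|[|k]].
  - rewrite Xc0. apply Ck_prod; auto.
    change (CkR n (fun v => F1 l1 l2 K b x3 v)). unfold F1, F1q, A1q, Tq.
    repeat (ckr || assumption).
  - rewrite Xc1. apply Ck_prod; auto.
    change (CkR n (fun v => F2 l1 l2 K b x3 v)). unfold F2, F2q, A2q, Tq.
    repeat (ckr || assumption).
  - rewrite Xc2. replace (fun u v : R => x3 v) with (fun u v : R => x3 v * (fun _ => 1) u).
    apply Ck_prod; auto. apply CkR_const.
    apply functional_extensionality; intro; apply functional_extensionality; intro. ring.
Qed.

Lemma cosh_pos' x : 0 < cosh x.
Proof. unfold cosh. assert (0 < exp x) by apply exp_pos. assert (0 < exp (- x)) by apply exp_pos. lra. Qed.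

Lemma alg_hyps l1 l2 K b x3 u v : Hyps l1 l2 K b x3 ->
  l1 <> 0 /\ l2 <> 0 /\ l1 + Bv l1 l2 K b v <> 0 /\ cosh (- l1 * u) <> 0 /\
  sin (x3 v) ^ 2 - (1 - cos (x3 v) ^ 2) = 0 /\ sin (b v) ^ 2 - (1 - cos (b v) ^ 2) = 0 /\
  Bv l1 l2 K b v ^ 2 - (l1 ^ 2 - K * (l1 ^ 2 * cos (b v) ^ 2 + l2 ^ 2 * sin (b v) ^ 2)) = 0 /\
  cosh (- l1 * u) ^ 2 - (sinh (- l1 * u) ^ 2 + 1) = 0.
Proof.
  intros H. assert (H' := H). destruct H' as (H1 & H2 & H12 & HK & HK0 & Hb & Hx3).
  assert (0 < Bv l1 l2 K b v) by (apply Bv_pos; auto).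
  assert (Hc := cosh_pos' (- l1 * u)).
  repeat split; try lra.
  - assert (E := sin2_cos2 (x3 v)). unfold Rsqr in E. lra.
  - assert (E := sin2_cos2 (b v)). unfold Rsqr in E. lra.
  - rewrite Bv_sq; auto. ring.
  - apply cosh_sinh_id.
Qed.

Lemma inner_eq l1 l2 K b x3 u v x y :
  inner l1 l2 (Xmap l1 l2 K b x3 u v) x y = innerQ l1 l2 (cos (x3 v)) (sin (x3 v)) x y.
Proof. reflexivity. Qed.

Ltac ahyps l1 l2 K b x3 u v H :=
  destruct (alg_hyps l1 l2 K b x3 u v H) as (ha1 & ha2 & ha3 & ha4 & ha5 & ha6 & ha7 & ha8).

Lemma conformal_X l1 l2 K b x3 : Hyps l1 l2 K b x3 -> conformal l1 l2 (Xmap l1 l2 K b x3).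
Proof.
  intros H u v. unfold fE, fF, fG. rewrite Xu_fun, Xv_fun by auto. rewrite !inner_eq.
  ahyps l1 l2 K b x3 u v H. split.
  - assert (E := alg_EG l1 l2 K (cos (x3 v)) (sin (x3 v)) (Bv l1 l2 K b v) (sin (b v)) (cos (b v))
       (cosh (- l1 * u)) (sinh (- l1 * u)) ha1 ha2 ha3 ha4 ha5 ha6 ha7 ha8).
    unfold XuF, XvF. lra.
  - exact (alg_F l1 l2 K (cos (x3 v)) (sin (x3 v)) (Bv l1 l2 K b v) (sin (b v)) (cos (b v))
       (cosh (- l1 * u)) (sinh (- l1 * u)) ha1 ha2 ha3 ha4 ha5 ha6 ha7 ha8).
Qed.

Lemma cov_zero l1 l2 K b x3 u v k : Hyps l1 l2 K b x3 -> (k < 3)%nat ->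
  cov_uu l1 l2 (Xmap l1 l2 K b x3) u v k + cov_vv l1 l2 (Xmap l1 l2 K b x3) u v k = 0.
Proof.
  intros H Hk. unfold cov_uu, cov_vv. rewrite Xu_fun, Xv_fun, christoffel_fun, puu_X, pvv_X by auto.
  cbv beta. change (coord (Xmap l1 l2 K b x3 u v) 2) with (x3 v).
  ahyps l1 l2 K b x3 u v H.
  destruct k as [|[|[|k]]]; [| | |lia].
  - exact (alg_V0 l1 l2 K (cos (x3 v)) (sin (x3 v)) (Bv l1 l2 K b v) (sin (b v)) (cos (b v))
       (cosh (- l1 * u)) (sinh (- l1 * u)) ha1 ha2 ha3 ha4 ha5 ha6 ha7 ha8).
  - exact (alg_V1 l1 l2 K (cos (x3 v)) (sin (x3 v)) (Bv l1 l2 K b v) (sin (b v)) (cos (b v))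
       (cosh (- l1 * u)) (sinh (- l1 * u)) ha1 ha2 ha3 ha4 ha5 ha6 ha7 ha8).
  - exact (alg_V2 l1 l2 K (cos (x3 v)) (sin (x3 v)) (Bv l1 l2 K b v) (sin (b v)) (cos (b v))
       (cosh (- l1 * u)) (sinh (- l1 * u)) ha1 ha2 ha3 ha4 ha5 ha6 ha7 ha8).
Qed.

Lemma minimal_X l1 l2 K b x3 : Hyps l1 l2 K b x3 -> minimal l1 l2 (Xmap l1 l2 K b x3).
Proof.
  intros H u v N HN. unfold mean_curvature. cbv beta zeta.
  destruct (conformal_X _ _ _ _ _ H u v) as [EG F0].
  rewrite F0, <- EG.
  assert (Hs : inner l1 l2 (Xmap l1 l2 K b x3 u v) (cov_uu l1 l2 (Xmap l1 l2 K b x3) u v) N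
             + inner l1 l2 (Xmap l1 l2 K b x3 u v) (cov_vv l1 l2 (Xmap l1 l2 K b x3) u v) N = 0).
  { assert (E0 := cov_zero l1 l2 K b x3 u v 0 H ltac:(lia)).
    assert (E1 := cov_zero l1 l2 K b x3 u v 1 H ltac:(lia)).
    assert (E2 := cov_zero l1 l2 K b x3 u v 2 H ltac:(lia)).
    unfold inner, sum3.
    replace (cov_vv l1 l2 (Xmap l1 l2 K b x3) u v 0) with (- cov_uu l1 l2 (Xmap l1 l2 K b x3) u v 0) by lra.
    replace (cov_vv l1 l2 (Xmap l1 l2 K b x3) u v 1) with (- cov_uu l1 l2 (Xmap l1 l2 K b x3) u v 1) by lra.
    replace (cov_vv l1 l2 (Xmap l1 l2 K b x3) u v 2) with (- cov_uu l1 l2 (Xmap l1 l2 K b x3) u v 2) by lra.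
    ring. }
  set (l := inner l1 l2 (Xmap l1 l2 K b x3 u v) (cov_uu l1 l2 (Xmap l1 l2 K b x3) u v) N) in *.
  set (n := inner l1 l2 (Xmap l1 l2 K b x3 u v) (cov_vv l1 l2 (Xmap l1 l2 K b x3) u v) N) in *.
  set (E := fE l1 l2 (Xmap l1 l2 K b x3) u v).
  replace (E * n - 2 * 0 * inner l1 l2 (Xmap l1 l2 K b x3 u v) (cov_uv l1 l2 (Xmap l1 l2 K b x3) u v) N + E * l)
    with (E * (l + n)) by ring.
  rewrite Hs. unfold Rdiv. ring.
Qed.

Lemma immersion_X l1 l2 K b x3 : Hyps l1 l2 K b x3 -> immersion (Xmap l1 l2 K b x3).
Proof.
  intros H u v al be Hk. assert (H' := H). destruct H' as (H1 & H2 & H12 & HK & HK0 & Hb & Hx3).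
  ahyps l1 l2 K b x3 u v H.
  assert (K0 := Hk 0%nat ltac:(lia)). assert (K1 := Hk 1%nat ltac:(lia)). assert (K2 := Hk 2%nat ltac:(lia)).
  rewrite Xu_fun, Xv_fun in K0, K1, K2 by auto.
  unfold XuF, XvF, XuQ, XvQ in K0, K1, K2.
  set (T := Tq l1 l2 K (Bv l1 l2 K b v)) in *.
  assert (HT : T <> 0).
  { unfold T, Tq. unfold Rdiv. apply Rmult_integral_contrapositive_currified.
    apply Rmult_integral_contrapositive_currified; [apply Rmult_integral_contrapositive_currified|]; lra.
    apply Rinv_neq_0_compat; auto. }
  assert (Hbe : be = 0).
  { assert (be * T = 0) by lra. destruct (Rmult_integral _ _ H0); auto. contradiction. }
  subst be.
  assert (E := alg_imm l1 l2 K (cos (x3 v)) (sin (x3 v)) (Bv l1 l2 K b v) (sin (b v)) (cos (b v))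
       (cosh (- l1 * u)) (sinh (- l1 * u)) ha1 ha2 ha3 ha4 ha5 ha6 ha7 ha8).
  set (f1 := F1q l1 l2 K (cos (x3 v)) (sin (x3 v)) (Bv l1 l2 K b v) (sin (b v)) (cos (b v))) in *.
  set (f2 := F2q l1 l2 K (cos (x3 v)) (sin (x3 v)) (Bv l1 l2 K b v) (sin (b v)) (cos (b v))) in *.
  set (sb := sin (b v)) in *. set (cb := cos (b v)) in *.
  fold T in E.
  assert (Hpos : 0 < (1 / (l1 ^ 2 * l2)) ^ 2 * T ^ 2 * (sb ^ 2 / l1 ^ 2 + cb ^ 2 / l2 ^ 2)).
  { assert (0 < (1 / (l1 ^ 2 * l2)) ^ 2).
    { apply pow_lt. unfold Rdiv. rewrite Rmult_1_l. apply Rinv_0_lt_compat.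
      apply Rmult_lt_0_compat; [apply pow_lt|]; lra. }
    assert (0 < T ^ 2) by (apply pow2_gt_0; auto).
    assert (0 < sb ^ 2 / l1 ^ 2 + cb ^ 2 / l2 ^ 2).
    { assert (0 < l1 ^ 2) by (apply pow_lt; lra). assert (0 < l2 ^ 2) by (apply pow_lt; lra).
      assert (0 <= sb ^ 2 / l1 ^ 2) by (apply Rdiv_le_0_compat; [apply pow2_ge_0|lra]).
      assert (0 <= cb ^ 2 / l2 ^ 2) by (apply Rdiv_le_0_compat; [apply pow2_ge_0|lra]).
      destruct (Req_dec sb 0) as [Hs0|Hs0].
      - assert (cb <> 0). { intros Hc0. rewrite Hs0, Hc0 in ha6. lra. }
        assert (0 < cb ^ 2 / l2 ^ 2) by (apply Rdiv_lt_0_compat; [apply pow2_gt_0; auto|lra]). lra.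
      - assert (0 < sb ^ 2 / l1 ^ 2) by (apply Rdiv_lt_0_compat; [apply pow2_gt_0; auto|lra]). lra. }
    apply Rmult_lt_0_compat; [apply Rmult_lt_0_compat|]; auto. }
  split; auto.
  set (ch := cosh (- l1 * u)) in *.
  assert (A0 : al * f1 * (l1 * ch) = 0) by lra.
  assert (A1 : al * f2 * (l1 * ch) = 0) by lra.
  assert (A : al ^ 2 * (f1 ^ 2 + f2 ^ 2) * (l1 * ch) ^ 2 = 0).
  { replace (al ^ 2 * (f1 ^ 2 + f2 ^ 2) * (l1 * ch) ^ 2) with
      ((al * f1 * (l1 * ch)) ^ 2 + (al * f2 * (l1 * ch)) ^ 2) by ring.
    rewrite A0, A1. ring. }
  assert (f1 ^ 2 + f2 ^ 2 <> 0) by lra.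
  assert ((l1 * ch) ^ 2 <> 0) by (apply pow_nonzero; apply Rmult_integral_contrapositive_currified; lra).
  destruct (Rmult_integral _ _ A) as [A'|A']; [|contradiction].
  destruct (Rmult_integral _ _ A') as [A''|A'']; [|contradiction].
  destruct (Req_dec al 0) as [Ha|Ha]; auto. exfalso. apply (pow_nonzero al 2) in Ha. contradiction.
Qed.

Definition Nf l1 l2 (b x3 : R -> R) (u v : R) : nat -> R :=
  NQ l1 l2 (cos (x3 v)) (sin (x3 v)) (sin (b v)) (cos (b v)) (cosh (- l1 * u)) (sinh (- l1 * u)).

Lemma fc_eq l1 l2 K b x3 u v a :
  frame_comp l1 l2 (Xmap l1 l2 K b x3 u v) (Nf l1 l2 b x3 u v) a =
  innerQ l1 l2 (cos (x3 v)) (sin (x3 v)) (Nf l1 l2 b x3 u v) (fun i => frq l1 l2 a i (cos (x3 v)) (sin (x3 v))).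
Proof. reflexivity. Qed.

Lemma ch_sh l1 u : cosh (- l1 * u) - sinh (- l1 * u) = exp (l1 * u).
Proof.
  unfold cosh, sinh. replace (- (- l1 * u)) with (l1 * u) by ring. field.
Qed.

Lemma normal_X l1 l2 K b x3 u v : Hyps l1 l2 K b x3 ->
  unit_normal l1 l2 (Xmap l1 l2 K b x3) u v (Nf l1 l2 b x3 u v) /\
  1 + frame_comp l1 l2 (Xmap l1 l2 K b x3 u v) (Nf l1 l2 b x3 u v) 2 <> 0 /\
  gauss_map l1 l2 (Xmap l1 l2 K b x3 u v) (Nf l1 l2 b x3 u v)
    = (RtoC (exp (- l1 * u)) * (RtoC (cos (b v)) + Ci * RtoC (sin (b v))))%C.
Proof.
  intros H. ahyps l1 l2 K b x3 u v H.
  assert (F0 := alg_fc0 l1 l2 K (cos (x3 v)) (sin (x3 v)) (Bv l1 l2 K b v) (sin (b v)) (cos (b v))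
       (cosh (- l1 * u)) (sinh (- l1 * u)) ha1 ha2 ha3 ha4 ha5 ha6 ha7 ha8).
  assert (F1' := alg_fc1 l1 l2 K (cos (x3 v)) (sin (x3 v)) (Bv l1 l2 K b v) (sin (b v)) (cos (b v))
       (cosh (- l1 * u)) (sinh (- l1 * u)) ha1 ha2 ha3 ha4 ha5 ha6 ha7 ha8).
  assert (F2' := alg_fc2 l1 l2 K (cos (x3 v)) (sin (x3 v)) (Bv l1 l2 K b v) (sin (b v)) (cos (b v))
       (cosh (- l1 * u)) (sinh (- l1 * u)) ha1 ha2 ha3 ha4 ha5 ha6 ha7 ha8).
  assert (Hc := cosh_pos' (- l1 * u)).
  assert (Hx := ch_sh l1 u). assert (Hex := exp_pos (l1 * u)).
  assert (Hf2 : 1 + frame_comp l1 l2 (Xmap l1 l2 K b x3 u v) (Nf l1 l2 b x3 u v) 2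
                = exp (l1 * u) / cosh (- l1 * u)).
  { rewrite fc_eq. unfold Nf. rewrite <- Hx. field_simplify; [|lra]. 
    replace (innerQ l1 l2 (cos (x3 v)) (sin (x3 v))
       (NQ l1 l2 (cos (x3 v)) (sin (x3 v)) (sin (b v)) (cos (b v)) (cosh (- l1 * u)) (sinh (- l1 * u)))
       (fun i : nat => frq l1 l2 2 i (cos (x3 v)) (sin (x3 v)))) with (- sinh (- l1 * u) / cosh (- l1 * u)) by lra.
    field. lra. }
  split; [|split].
  - unfold unit_normal. rewrite Xu_fun, Xv_fun by auto. rewrite !inner_eq. split; [|split].
    + assert (E := alg_N1 l1 l2 K (cos (x3 v)) (sin (x3 v)) (Bv l1 l2 K b v) (sin (b v)) (cos (b v))
       (cosh (- l1 * u)) (sinh (- l1 * u)) ha1 ha2 ha3 ha4 ha5 ha6 ha7 ha8). unfold Nf. lra.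
    + exact (alg_N2 l1 l2 K (cos (x3 v)) (sin (x3 v)) (Bv l1 l2 K b v) (sin (b v)) (cos (b v))
       (cosh (- l1 * u)) (sinh (- l1 * u)) ha1 ha2 ha3 ha4 ha5 ha6 ha7 ha8).
    + exact (alg_N3 l1 l2 K (cos (x3 v)) (sin (x3 v)) (Bv l1 l2 K b v) (sin (b v)) (cos (b v))
       (cosh (- l1 * u)) (sinh (- l1 * u)) ha1 ha2 ha3 ha4 ha5 ha6 ha7 ha8).
  - rewrite Hf2. apply Rgt_not_eq. apply Rdiv_lt_0_compat; lra.
  - unfold gauss_map. rewrite Hf2.
    rewrite (fc_eq l1 l2 K b x3 u v 0), (fc_eq l1 l2 K b x3 u v 1).
    unfold Nf.
    replace (innerQ l1 l2 (cos (x3 v)) (sin (x3 v))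
       (NQ l1 l2 (cos (x3 v)) (sin (x3 v)) (sin (b v)) (cos (b v)) (cosh (- l1 * u)) (sinh (- l1 * u)))
       (fun i : nat => frq l1 l2 0 i (cos (x3 v)) (sin (x3 v)))) with (cos (b v) / cosh (- l1 * u)) by lra.
    replace (innerQ l1 l2 (cos (x3 v)) (sin (x3 v))
       (NQ l1 l2 (cos (x3 v)) (sin (x3 v)) (sin (b v)) (cos (b v)) (cosh (- l1 * u)) (sinh (- l1 * u)))
       (fun i : nat => frq l1 l2 1 i (cos (x3 v)) (sin (x3 v)))) with (sin (b v) / cosh (- l1 * u)) by lra.
    replace (exp (- l1 * u)) with (/ exp (l1 * u)) by (rewrite <- exp_Ropp; f_equal; ring).
    unfold Cdiv, Cmult, Cinv, Cplus, RtoC, Ci. simpl.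
    apply injective_projections; simpl; field; lra.
Qed.

Theorem theorem4p1 (l1 l2 K : R) (b x3 : R -> R)
  (Hl : (l1 > l2 /\ l2 > 0) \/ (l1 = 1 /\ l2 = 1))
  (HK0 : K <> 0) (HK1 : Rabs K < 1)
  (Hb : forall v, is_derive b v (bprime l1 l2 K (b v))) (Hb0 : b 0 = 0)
  (Hx3 : forall v, is_derive x3 v (x3prime l1 l2 K b v)) (Hx30 : x3 0 = 0) :
  smooth_map (Xmap l1 l2 K b x3) /\
  immersion (Xmap l1 l2 K b x3) /\
  conformal l1 l2 (Xmap l1 l2 K b x3) /\
  minimal l1 l2 (Xmap l1 l2 K b x3) /\
  exists N : R -> R -> (nat -> R),
    forall u v,
      unit_normal l1 l2 (Xmap l1 l2 K b x3) u v (N u v) /\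
      1 + frame_comp l1 l2 (Xmap l1 l2 K b x3 u v) (N u v) 2 <> 0 /\
      gauss_map l1 l2 (Xmap l1 l2 K b x3 u v) (N u v)
        = (RtoC (exp (- l1 * u)) * (RtoC (cos (b v)) + Ci * RtoC (sin (b v))))%C.
Proof.
  assert (H : Hyps l1 l2 K b x3).
  { unfold Hyps. assert (HK : -1 < K < 1) by (apply Rabs_def2 in HK1; lra).
    destruct Hl as [[A B]|[A B]];
    (split; [lra|split; [lra|split; [lra|split; [exact HK|split; [exact HK0|split; [exact Hb|exact Hx3]]]]]]). }
  split; [apply smooth_X; auto|].
  split; [apply immersion_X; auto|].
  split; [apply conformal_X; auto|].
  split; [apply minimal_X; auto|].
  exists (Nf l1 l2 b x3). intros u v. apply normal_X; auto.
Qed.
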